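(* Let $\Omega\subset\mathbb{R}^2$ be a domain and $u\in C^{2}(\Omega)$. Let $S(u)=\{(x,y)\in\Omega:u_x-y=0,\ u_y+x=0\}$, on $\Omega\setminus S(u)$ let $N(u)=(u_x-y,u_y+x)/\sqrt{(u_x-y)^2+(u_y+x)^2}$ and $H=\operatorname{div}N(u)$. Let $$U=\begin{pmatrix}u_{xx}&u_{xy}-1\\ u_{xy}+1&u_{yy}\end{pmatrix}.$$ Let $p_0\in S(u)$ and suppose there are a constant $C>0$ and a neighborhood of $p_0$ on which $|H(p)|\le C/r(p)$ for $p\notin S(u)$, where $r(p)=|p-p_0|$. Then the following are equivalent: (1) $p_0$ is not isolated in $S(u)$; (2) $\det U(p_0)=0$; (3) there exists a small neighborhood of $p_0$ which intersects $S(u)$ in exactly a $C^{1}$ smooth curve passing through $p_0$.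
   Context: $\operatorname{div}$ is the Euclidean divergence in the $xy$-plane. *)

(* Defs.v *)
From Stdlib Require Import Reals.
From Coquelicot Require Import Coquelicot.
Open Scope R_scope.

Definition connected2 (O : R * R -> Prop) : Prop :=
  ~ (exists A B : R * R -> Prop, open A /\ open B /\
       (forall p, O p -> A p \/ B p) /\
       (exists p, O p /\ A p) /\ (exists p, O p /\ B p) /\
       (forall p, O p -> A p -> B p -> False)).

Definition domain2 (O : R * R -> Prop) : Prop :=
  open O /\ (exists p, O p) /\ connected2 O.

Definition dx (f : R * R -> R) (p : R * R) : R :=
  Derive (fun t => f (t, snd p)) (fst p).
Definition dy (f : R * R -> R) (p : R * R) : R :=
  Derive (fun t => f (fst p, t)) (snd p).
Definition ex_dx (f : R * R -> R) (p : R * R) : Prop :=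
  ex_derive (fun t => f (t, snd p)) (fst p).
Definition ex_dy (f : R * R -> R) (p : R * R) : Prop :=
  ex_derive (fun t => f (fst p, t)) (snd p).

Definition C1_on (O : R * R -> Prop) (f : R * R -> R) : Prop :=
  forall p, O p ->
    continuous f p /\ ex_dx f p /\ ex_dy f p /\
    continuous (dx f) p /\ continuous (dy f) p.

Definition C2_on (O : R * R -> Prop) (f : R * R -> R) : Prop :=
  C1_on O f /\ C1_on O (dx f) /\ C1_on O (dy f).

Definition Sset (O : R * R -> Prop) (u : R * R -> R) (p : R * R) : Prop :=
  O p /\ dx u p - snd p = 0 /\ dy u p + fst p = 0.

Definition Nnorm (u : R * R -> R) (p : R * R) : R :=
  sqrt ((dx u p - snd p) ^ 2 + (dy u p + fst p) ^ 2).
Definition N1 (u : R * R -> R) (p : R * R) : R := (dx u p - snd p) / Nnorm u p.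
Definition N2 (u : R * R -> R) (p : R * R) : R := (dy u p + fst p) / Nnorm u p.

Definition Hcurv (u : R * R -> R) (p : R * R) : R :=
  dx (N1 u) p + dy (N2 u) p.

Definition detU (u : R * R -> R) (p : R * R) : R :=
  dx (dx u) p * dy (dy u) p - (dy (dx u) p - 1) * (dy (dx u) p + 1).

Definition dist2 (p q : R * R) : R :=
  sqrt ((fst p - fst q) ^ 2 + (snd p - snd q) ^ 2).

Definition regular_C1_arc (a b : R) (g : R -> R * R) : Prop :=
  a < b /\
  (forall t, a < t < b ->
     ex_derive (fun s => fst (g s)) t /\ ex_derive (fun s => snd (g s)) t /\
     continuous (Derive (fun s => fst (g s))) t /\
     continuous (Derive (fun s => snd (g s))) t /\
     (Derive (fun s => fst (g s)) t <> 0 \/ Derive (fun s => snd (g s)) t <> 0)) /\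
  (forall s t, a < s < b -> a < t < b -> g s = g t -> s = t).

(* Main.v *)
Require Import Defs.
From Stdlib Require Import Reals Lra Psatz ClassicalEpsilon List.
From Coquelicot Require Import Coquelicot.
Open Scope R_scope.


Definition box (p q : R * R) (r : R) : Prop :=
  Rabs (fst q - fst p) < r /\ Rabs (snd q - snd p) < r.

Definition cont_at (f : R * R -> R) (p : R * R) : Prop :=
  forall eps, 0 < eps -> exists d, 0 < d /\ forall q, box p q d -> Rabs (f q - f p) < eps.

Definition betw (a b c : R) : Prop := Rmin a b <= c <= Rmax a b.

Lemma betw_close a b c x0 r : betw a b c -> Rabs (a - x0) < r -> Rabs (b - x0) < r -> Rabs (c - x0) < r.
Proof. unfold betw, Rmin, Rmax; destruct (Rle_dec a b); intros [] H1 H2;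
  apply Rabs_def2 in H1; apply Rabs_def2 in H2; apply Rabs_def1; lra. Qed.

Lemma betw_le a b c : betw a b c -> Rabs (c - a) <= Rabs (b - a).
Proof. unfold betw, Rmin, Rmax; destruct (Rle_dec a b); intros [];
  unfold Rabs; repeat destruct Rcase_abs; lra. Qed.

Lemma betw_le2 a b c : betw a b c -> Rabs (c - a) <= Rabs (a - b).
Proof. intros H; rewrite Rabs_minus_sym with (x:=a); now apply betw_le. Qed.

Lemma betw_refl a : betw a a a.
Proof. unfold betw, Rmin, Rmax; destruct (Rle_dec a a); lra. Qed.

Lemma ball_box (p q : R * R) (e : R) : ball p e q <-> box p q e.
Proof. split; intro H; exact H. Qed.

Lemma mvt1 (f df : R -> R) (a b : R) :
  (forall x, betw a b x -> is_derive f x (df x)) ->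
  exists c, betw a b c /\ f b - f a = df c * (b - a).
Proof.
  intros H.
  destruct (MVT_gen f a b df) as [c [Hc E]].
  - intros x Hx. apply H. unfold betw. lra.
  - intros x Hx. apply continuity_pt_filterlim.
    assert (Hd : ex_derive f x) by (eexists; apply H; exact Hx).
    exact (ex_derive_continuous f x Hd).
  - exists c. split; [exact Hc| exact E].
Qed.

Section MVT2.
Variables (G Gx Gy : R * R -> R) (p0 : R * R) (r : R).
Hypothesis HGx : forall p, box p0 p r -> is_derive (fun t => G (t, snd p)) (fst p) (Gx p).
Hypothesis HGy : forall p, box p0 p r -> is_derive (fun t => G (fst p, t)) (snd p) (Gy p).

Lemma mvt_x x x' y : Rabs (x - fst p0) < r -> Rabs (x' - fst p0) < r -> Rabs (y - snd p0) < r ->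
  exists c, betw x x' c /\ G (x', y) - G (x, y) = Gx (c, y) * (x' - x).
Proof.
  intros H1 H2 H3.
  apply (mvt1 (fun t => G (t, y)) (fun t => Gx (t, y))).
  intros c Hc. apply (HGx (c, y)). split; simpl; auto. eapply betw_close; eauto.
Qed.

Lemma mvt_y x y y' : Rabs (x - fst p0) < r -> Rabs (y - snd p0) < r -> Rabs (y' - snd p0) < r ->
  exists c, betw y y' c /\ G (x, y') - G (x, y) = Gy (x, c) * (y' - y).
Proof.
  intros H1 H2 H3.
  apply (mvt1 (fun t => G (x, t)) (fun t => Gy (x, t))).
  intros c Hc. apply (HGy (x, c)). split; simpl; auto. eapply betw_close; eauto.
Qed.

Lemma mvt_xy x y : Rabs (x - fst p0) < r -> Rabs (y - snd p0) < r ->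
  exists c d, betw (fst p0) x c /\ betw (snd p0) y d /\
   G (x, y) - G p0 = Gx (c, y) * (x - fst p0) + Gy (fst p0, d) * (y - snd p0).
Proof.
  intros H1 H2.
  assert (r0 : Rabs (fst p0 - fst p0) < r) by (eapply Rle_lt_trans; [|exact H1]; rewrite Rminus_diag, Rabs_R0; apply Rabs_pos).
  assert (r1 : Rabs (snd p0 - snd p0) < r) by (eapply Rle_lt_trans; [|exact H2]; rewrite Rminus_diag, Rabs_R0; apply Rabs_pos).
  destruct (mvt_x (fst p0) x y r0 H1 H2) as [c [Hc Ec]].
  destruct (mvt_y (fst p0) (snd p0) y r0 r1 H2) as [d [Hd Ed]].
  exists c, d. split; [auto|split; auto].
  destruct p0 as [x0 y0]; simpl in *. lra.
Qed.
End MVT2.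

Definition cl (e k x x0 : R) : Prop := Rabs (x - x0) <= e * k.

Lemma cl_const e c : 0 <= e -> cl e 0 c c.
Proof. intros; unfold cl; rewrite Rminus_diag, Rabs_R0; lra. Qed.

Lemma cl_add e k1 k2 x x0 y y0 : cl e k1 x x0 -> cl e k2 y y0 -> cl e (k1 + k2) (x + y) (x0 + y0).
Proof. unfold cl; intros H1 H2.
  replace (x + y - (x0 + y0)) with ((x - x0) + (y - y0)) by ring.
  eapply Rle_trans; [apply Rabs_triang|]. lra. Qed.

Lemma cl_opp e k x x0 : cl e k x x0 -> cl e k (- x) (- x0).
Proof. unfold cl; intros H. replace (- x - - x0) with (- (x - x0)) by ring. now rewrite Rabs_Ropp. Qed.

Lemma cl_mul e k1 k2 x x0 y y0 : 0 <= e <= 1 -> cl e k1 x x0 -> cl e k2 y y0 ->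
  cl e (k1 * Rabs y0 + Rabs x0 * k2 + k1 * k2) (x * y) (x0 * y0).
Proof. unfold cl; intros He H1 H2.
  replace (x * y - x0 * y0) with ((x - x0) * y0 + x0 * (y - y0) + (x - x0) * (y - y0)) by ring.
  assert (A1 := Rabs_pos (x - x0)). assert (A2 := Rabs_pos (y - y0)).
  assert (B1 := Rabs_pos x0). assert (B2 := Rabs_pos y0).
  eapply Rle_trans; [apply Rabs_triang|].
  eapply Rle_trans; [apply Rplus_le_compat_r; apply Rabs_triang|].
  rewrite !Rabs_mult.
  assert (Rabs (x - x0) * Rabs y0 <= e * k1 * Rabs y0) by (apply Rmult_le_compat_r; lra).
  assert (Rabs x0 * Rabs (y - y0) <= Rabs x0 * (e * k2)) by (apply Rmult_le_compat_l; lra).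
  assert (Rabs (x - x0) * Rabs (y - y0) <= e * k1 * (e * k2)) by (apply Rmult_le_compat; lra).
  assert (e * k1 * (e * k2) <= e * (k1 * k2)).
  { destruct (Req_dec e 0) as [->|]. rewrite !Rmult_0_l; lra.
    assert (0 <= k1). { assert (0 <= e * k1) by lra. nra. }
    assert (0 <= k2). { assert (0 <= e * k2) by lra. nra. }
    assert (0 <= e * (k1 * k2)) by (apply Rmult_le_pos; [lra|apply Rmult_le_pos; lra]).
    replace (e * k1 * (e * k2)) with (e * (e * (k1 * k2))) by ring.
    assert (e * (e * (k1 * k2)) <= 1 * (e * (k1 * k2))) by (apply Rmult_le_compat_r; lra).
    lra. }
  nra.
Qed.

Lemma cl_var e x x0 : Rabs (x - x0) <= e -> cl e 1 x x0.
Proof. unfold cl; lra. Qed.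

Lemma cl_use e k x x0 : cl e k x x0 -> Rabs (x - x0) <= e * k.
Proof. auto. Qed.


Lemma cont_at_le f p e : cont_at f p -> 0 < e -> exists d, 0 < d /\ forall q, box p q d -> Rabs (f q - f p) <= e.
Proof. intros H He. destruct (H e He) as [d [Hd H']]. exists d; split; auto. intros q Hq; left; auto. Qed.

Lemma box_mono p q r r' : box p q r -> r <= r' -> box p q r'.
Proof. unfold box; intros [] ?; split; lra. Qed.

Lemma det_cl : exists K3, forall e a b c d a0 b0 c0 d0, 0 <= e <= 1 ->
  cl e 1 a a0 -> cl e 1 b b0 -> cl e 1 c c0 -> cl e 1 d d0 ->
  cl e (K3 a0 b0 c0 d0) (a * b - c * d) (a0 * b0 - c0 * d0).
Proof.
  eexists. intros e a b c d a0 b0 c0 d0 He Ha Hb Hc Hd. unfold Rminus.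
  eapply cl_add; [eapply cl_mul; eauto | eapply cl_opp, cl_mul; eauto].
Qed.

Lemma isolated_core (G K Gx Gy Kx Ky : R * R -> R) (p0 : R * R) (r : R) :
  0 < r ->
  (forall p, box p0 p r -> is_derive (fun t => G (t, snd p)) (fst p) (Gx p)) ->
  (forall p, box p0 p r -> is_derive (fun t => G (fst p, t)) (snd p) (Gy p)) ->
  (forall p, box p0 p r -> is_derive (fun t => K (t, snd p)) (fst p) (Kx p)) ->
  (forall p, box p0 p r -> is_derive (fun t => K (fst p, t)) (snd p) (Ky p)) ->
  cont_at Gx p0 -> cont_at Gy p0 -> cont_at Kx p0 -> cont_at Ky p0 ->
  Gx p0 * Ky p0 - Gy p0 * Kx p0 <> 0 ->
  exists r', 0 < r' /\ forall q, box p0 q r' -> G q = G p0 -> K q = K p0 -> q = p0.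
Proof.
  intros Hr HGx HGy HKx HKy CGx CGy CKx CKy Hdet.
  set (D0 := Gx p0 * Ky p0 - Gy p0 * Kx p0) in *.
  destruct det_cl as [K3f HK3].
  set (K3 := K3f (Gx p0) (Ky p0) (Gy p0) (Kx p0)).
  assert (HD0 : 0 < Rabs D0) by (apply Rabs_pos_lt; auto).
  set (e := Rmin 1 (Rabs D0 / (2 * (Rabs K3 + 1)))).
  assert (He0 : 0 < e).
  { unfold e. apply Rmin_glb_lt. lra. apply Rdiv_lt_0_compat. lra. assert (0 <= Rabs K3) by apply Rabs_pos. lra. }
  assert (He1 : e <= 1) by apply Rmin_l.
  assert (HeK : e * Rabs K3 < Rabs D0).
  { assert (e <= Rabs D0 / (2 * (Rabs K3 + 1))) by apply Rmin_r.
    assert (0 <= Rabs K3) by apply Rabs_pos.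
    assert (e * (2 * (Rabs K3 + 1)) <= Rabs D0).
    { apply (Rmult_le_compat_r (2 * (Rabs K3 + 1))) in H; [|lra].
      unfold Rdiv in H. rewrite Rmult_assoc, Rinv_l in H; lra. }
    nra. }
  destruct (cont_at_le _ _ _ CGx He0) as [d1 [Hd1 E1]].
  destruct (cont_at_le _ _ _ CGy He0) as [d2 [Hd2 E2]].
  destruct (cont_at_le _ _ _ CKx He0) as [d3 [Hd3 E3]].
  destruct (cont_at_le _ _ _ CKy He0) as [d4 [Hd4 E4]].
  set (r' := Rmin (Rmin r d1) (Rmin d2 (Rmin d3 d4))).
  assert (Hr'1 : r' <= r /\ r' <= d1 /\ r' <= d2 /\ r' <= d3 /\ r' <= d4).
  { unfold r'. 
    assert (H1 := Rmin_l (Rmin r d1) (Rmin d2 (Rmin d3 d4))).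
    assert (H2 := Rmin_r (Rmin r d1) (Rmin d2 (Rmin d3 d4))).
    assert (H3 := Rmin_l r d1). assert (H4 := Rmin_r r d1).
    assert (H5 := Rmin_l d2 (Rmin d3 d4)). assert (H6 := Rmin_r d2 (Rmin d3 d4)).
    assert (H7 := Rmin_l d3 d4). assert (H8 := Rmin_r d3 d4). lra. }
  assert (Hr'0 : 0 < r').
  { unfold r'. repeat apply Rmin_glb_lt; auto. }
  exists r'. split; auto.
  intros [x y] [Bx By] EG EK. simpl in Bx, By.
  destruct p0 as [x0 y0]. simpl in *.
  destruct (mvt_xy G Gx Gy (x0, y0) r HGx HGy x y) as [c1 [c2 [Hc1 [Hc2 EqG]]]]; simpl; try lra.
  destruct (mvt_xy K Kx Ky (x0, y0) r HKx HKy x y) as [c3 [c4 [Hc3 [Hc4 EqK]]]]; simpl; try lra.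
  simpl in *. rewrite EG in EqG. rewrite EK in EqK.
  apply betw_le in Hc1. apply betw_le in Hc2. apply betw_le in Hc3. apply betw_le in Hc4.
  assert (Rabs (x0 - x0) = 0) by (rewrite Rminus_diag; apply Rabs_R0).
  assert (A1 : cl e 1 (Gx (c1, y)) (Gx (x0, y0))).
  { apply cl_var. apply E1. split; simpl; lra. }
  assert (A2 : cl e 1 (Gy (x0, c2)) (Gy (x0, y0))).
  { apply cl_var. apply E2. split; simpl; lra. }
  assert (A3 : cl e 1 (Kx (c3, y)) (Kx (x0, y0))).
  { apply cl_var. apply E3. split; simpl; lra. }
  assert (A4 : cl e 1 (Ky (x0, c4)) (Ky (x0, y0))).
  { apply cl_var. apply E4. split; simpl; lra. }
  assert (HC := HK3 e _ _ _ _ _ _ _ _ (conj (Rlt_le _ _ He0) He1) A1 A4 A2 A3).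
  unfold cl in HC. fold K3 in HC. fold D0 in HC.
  set (D' := Gx (c1, y) * Ky (x0, c4) - Gy (x0, c2) * Kx (c3, y)) in *.
  assert (HD' : D' <> 0).
  { intro Z. rewrite Z in HC. rewrite Rminus_0_l, Rabs_Ropp in HC.
    assert (e * K3 <= e * Rabs K3) by (apply Rmult_le_compat_l; [lra| apply RRle_abs]). lra. }
  assert (EX : D' * (x - x0) = 0).
  { unfold D'. 
    replace ((Gx (c1, y) * Ky (x0, c4) - Gy (x0, c2) * Kx (c3, y)) * (x - x0)) with
      (Ky (x0, c4) * (Gx (c1, y) * (x - x0) + Gy (x0, c2) * (y - y0)) - Gy (x0, c2) * (Kx (c3, y) * (x - x0) + Ky (x0, c4) * (y - y0))) by ring.
    rewrite <- EqG, <- EqK. ring. }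
  assert (EY : D' * (y - y0) = 0).
  { unfold D'. 
    replace ((Gx (c1, y) * Ky (x0, c4) - Gy (x0, c2) * Kx (c3, y)) * (y - y0)) with
      (Gx (c1, y) * (Kx (c3, y) * (x - x0) + Ky (x0, c4) * (y - y0)) - Kx (c3, y) * (Gx (c1, y) * (x - x0) + Gy (x0, c2) * (y - y0))) by ring.
    rewrite <- EqG, <- EqK. ring. }
  apply Rmult_integral in EX. apply Rmult_integral in EY.
  destruct EX as [|EX]; [contradiction|]. destruct EY as [|EY]; [contradiction|].
  f_equal; lra.
Qed.


Lemma cont_list (l : list (R * R -> R)) p e : 0 < e -> (forall f, In f l -> cont_at f p) ->
  exists d, 0 < d /\ forall q, box p q d -> forall f, In f l -> Rabs (f q - f p) <= e.
Proof.
  intros He. induction l as [|f0 l IH]; intros Hl.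
  - exists 1. split; [lra|]. intros q _ f [].
  - destruct IH as [d [Hd Hq]]. { intros f Hf. apply Hl. right; auto. }
    destruct (cont_at_le f0 p e (Hl f0 (or_introl eq_refl)) He) as [d0 [Hd0 Hq0]].
    exists (Rmin d d0). split. apply Rmin_glb_lt; auto.
    intros q Hb f [<-|Hf].
    + apply Hq0. eapply box_mono; [exact Hb| apply Rmin_r].
    + apply Hq; auto. eapply box_mono; [exact Hb| apply Rmin_l].
Qed.

Lemma locally_R_intro (x : R) (P : R -> Prop) : (exists d, 0 < d /\ forall y, Rabs (y - x) < d -> P y) -> locally x P.
Proof. intros [d [Hd H]]. exists (mkposreal d Hd). intros y Hy. apply H; exact Hy. Qed.

Lemma cont_R_intro (f : R -> R) x : (forall eps, 0 < eps -> exists d, 0 < d /\ forall t, Rabs (t - x) < d -> Rabs (f t - f x) < eps) -> continuous f x.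
Proof. intros H. apply filterlim_locally. intros eps. apply locally_R_intro.
  destruct (H eps (cond_pos eps)) as [d [Hd H']]. exists d; split; [exact Hd|]. intros t Ht. apply H'; exact Ht. Qed.

Lemma div_close A B A0 B0 eps m : 0 < m -> Rabs (A - A0) <= eps -> Rabs (B - B0) <= eps ->
  m <= Rabs B -> m <= Rabs B0 -> Rabs (A / B - A0 / B0) <= eps * (Rabs B0 + Rabs A0) / (m * m).
Proof.
  intros Hm HA HB HmB HmB0.
  assert (B <> 0) by (intro Z; rewrite Z, Rabs_R0 in HmB; lra).
  assert (B0 <> 0) by (intro Z; rewrite Z, Rabs_R0 in HmB0; lra).
  replace (A / B - A0 / B0) with (((A - A0) * B0 - A0 * (B - B0)) / (B * B0)) by (field; auto).
  unfold Rdiv. rewrite Rabs_mult, Rabs_inv, Rabs_mult.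
  assert (Hn : Rabs ((A - A0) * B0 - A0 * (B - B0)) <= eps * (Rabs B0 + Rabs A0)).
  { unfold Rminus at 1. eapply Rle_trans; [apply Rabs_triang|]. rewrite Rabs_Ropp, !Rabs_mult.
    assert (Rabs (A - A0) * Rabs B0 <= eps * Rabs B0) by (apply Rmult_le_compat_r; auto; apply Rabs_pos).
    assert (Rabs A0 * Rabs (B - B0) <= Rabs A0 * eps) by (apply Rmult_le_compat_l; auto; apply Rabs_pos).
    lra. }
  assert (Hd : m * m <= Rabs B * Rabs B0) by (apply Rmult_le_compat; lra).
  apply Rmult_le_compat; auto.
  - apply Rabs_pos.
  - left; apply Rinv_0_lt_compat. nra.
  - apply Rinv_le_contravar; nra.
Qed.

Lemma sq_le_abs u v : Rabs u <= v -> u ^ 2 <= v ^ 2.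
Proof. intros H. assert (0 <= Rabs u) by apply Rabs_pos.
  rewrite <- (pow2_abs u). apply pow_incr; lra. Qed.

Lemma dist2_ge_x p q : Rabs (fst p - fst q) <= dist2 p q.
Proof. unfold dist2. rewrite <- sqrt_pow2 with (x := Rabs (fst p - fst q)) by apply Rabs_pos.
  apply sqrt_le_1_alt. rewrite pow2_abs. assert (0 <= (snd p - snd q)^2) by apply pow2_ge_0. lra. Qed.

Lemma dist2_ge_y p q : Rabs (snd p - snd q) <= dist2 p q.
Proof. unfold dist2. rewrite <- sqrt_pow2 with (x := Rabs (snd p - snd q)) by apply Rabs_pos.
  apply sqrt_le_1_alt. rewrite pow2_abs. assert (0 <= (fst p - fst q)^2) by apply pow2_ge_0. lra. Qed.

Lemma dist2_le p q : dist2 p q <= Rabs (fst p - fst q) + Rabs (snd p - snd q).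
Proof. unfold dist2.
  assert (0 <= Rabs (fst p - fst q)) by apply Rabs_pos. assert (0 <= Rabs (snd p - snd q)) by apply Rabs_pos.
  rewrite <- sqrt_pow2 with (x := Rabs (fst p - fst q) + Rabs (snd p - snd q)) by lra.
  apply sqrt_le_1_alt. rewrite <- (pow2_abs (fst p - fst q)), <- (pow2_abs (snd p - snd q)). nra. Qed.

Definition Phi l c1 c2 c3 A B := c1 * ((A * l) * (A * l)) + c2 * ((A * l) * (1 + B * l)) + c3 * ((1 + B * l) * (1 + B * l)).

Lemma Phi_cl : exists Kf, forall e l c1 c2 c3 A B c10 c20 c30 A0 B0, 0 <= e <= 1 ->
  cl e 1 c1 c10 -> cl e 1 c2 c20 -> cl e 1 c3 c30 -> cl e 1 A A0 -> cl e 1 B B0 ->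
  cl e (Kf l c10 c20 c30 A0 B0) (Phi l c1 c2 c3 A B) (Phi l c10 c20 c30 A0 B0).
Proof.
  eexists. intros e l c1 c2 c3 A B c10 c20 c30 A0 B0 He H1 H2 H3 H4 H5. unfold Phi.
  repeat first [ eassumption | apply cl_const; lra | eapply cl_add | eapply cl_mul ].
Qed.
Lemma final_alg u X P C WsW eL : 0 < u -> 0 <= X -> 1/2 <= P -> 0 <= C -> 0 <= WsW -> u <= eL * X ->
  u ^ 2 * P * X <= C * (u ^ 3 * WsW) -> 2 * C * WsW * eL <= 1/2 -> False.
Proof.
  intros Hu HX HP HC HW Hue H1 H2.
  assert (A1 : u ^ 2 * ((1/2) * X) <= u ^ 2 * (C * u * WsW)).
  { assert (u ^ 2 * ((1/2) * X) <= u ^ 2 * P * X) by (assert (0 <= u^2 * X) by (apply Rmult_le_pos; [apply pow_le|]; lra); nra). 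
    replace (u ^ 2 * (C * u * WsW)) with (C * (u ^ 3 * WsW)) by ring. lra. }
  assert (A2 : (1/2) * X <= C * u * WsW).
  { apply Rmult_le_reg_l with (r := u ^ 2); [apply pow_lt; lra| exact A1]. }
  assert (A3 : C * u * WsW <= C * (eL * X) * WsW).
  { apply Rmult_le_compat_r; [lra|]. apply Rmult_le_compat_l; lra. }
  assert (A4 : C * (eL * X) * WsW = (2 * C * WsW * eL) * X / 2) by field.
  assert (A5 : (2 * C * WsW * eL) * X <= (1/2) * X) by (apply Rmult_le_compat_r; lra).
  assert (X = 0) by lra. subst X. lra.
Qed.


Lemma abs_le_inv x y : Rabs x <= y -> - y <= x <= y.
Proof. unfold Rabs; destruct Rcase_abs; intros; lra. Qed.

Lemma sign_aux a g1 g2 dx M eta del : a <> 0 -> 0 < M -> 0 < eta ->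
  a * g1 >= a * a / 2 -> Rabs g2 <= M -> Rabs dx < del -> del * (2 * M) <= Rabs a * eta ->
  a * (g1 * eta + g2 * dx) > 0.
Proof.
  intros Ha HM He H1 H2 H3 H4.
  assert (Haa : 0 < Rabs a) by (apply Rabs_pos_lt; auto).
  assert (A1 : Rabs (a * g2 * dx) <= Rabs a * M * Rabs dx).
  { rewrite !Rabs_mult. apply Rmult_le_compat_r; [apply Rabs_pos|]. apply Rmult_le_compat_l; lra. }
  assert (A2 : Rabs a * M * Rabs dx < Rabs a * M * del).
  { apply Rmult_lt_compat_l; [nra|lra]. }
  assert (A3 : Rabs a * M * del * 2 <= Rabs a * (Rabs a * eta)).
  { replace (Rabs a * M * del * 2) with (Rabs a * (del * (2 * M))) by ring. apply Rmult_le_compat_l; lra. }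
  assert (A4 : Rabs a * Rabs a = a * a) by (rewrite <- Rabs_mult; apply Rabs_right; nra).
  assert (A5 : a * g2 * dx >= - Rabs (a * g2 * dx)) by (assert (H := Rabs_Ropp (a*g2*dx)); assert (H' := RRle_abs (- (a*g2*dx))); lra).
  nra.
Qed.

Lemma derive_contpt f c d : is_derive f c d -> continuity_pt f c.
Proof. intros H. apply continuity_pt_filterlim.
  assert (Hd : ex_derive f c) by (eexists; exact H). exact (ex_derive_continuous f c Hd). Qed.

Section Curve.
Variables (G K Gx Gy Kx Ky c1 c2 c3 : R * R -> R) (x0 y0 r0 C : R).
Local Notation p0 := (x0, y0).
Hypothesis Hr0 : 0 < r0.
Hypothesis HGx : forall p, box p0 p r0 -> is_derive (fun t => G (t, snd p)) (fst p) (Gx p).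
Hypothesis HGy : forall p, box p0 p r0 -> is_derive (fun t => G (fst p, t)) (snd p) (Gy p).
Hypothesis HKx : forall p, box p0 p r0 -> is_derive (fun t => K (t, snd p)) (fst p) (Kx p).
Hypothesis HKy : forall p, box p0 p r0 -> is_derive (fun t => K (fst p, t)) (snd p) (Ky p).
Hypothesis CGx : forall p, box p0 p r0 -> cont_at Gx p.
Hypothesis CGy : forall p, box p0 p r0 -> cont_at Gy p.
Hypothesis CKx : cont_at Kx p0.
Hypothesis CKy : cont_at Ky p0.
Hypothesis Cc1 : cont_at c1 p0.
Hypothesis Cc2 : cont_at c2 p0.
Hypothesis Cc3 : cont_at c3 p0.
Hypothesis HG0 : G p0 = 0.
Hypothesis HK0 : K p0 = 0.
Hypothesis Ha : Gy p0 <> 0.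
Hypothesis Hdet : Gy p0 * Kx p0 - Gx p0 * Ky p0 = 0.
Hypothesis HD : c1 p0 * Gy p0 ^ 2 + c2 p0 * Gy p0 * Ky p0 + c3 p0 * Ky p0 ^ 2 = 0.
Hypothesis HE : c2 p0 * Gy p0 + 2 * c3 p0 * Ky p0 <> 0.
Hypothesis HC : 0 < C.
Hypothesis HH : forall p, box p0 p r0 -> (G p <> 0 \/ K p <> 0) ->
  Rabs (c1 p * G p ^ 2 + c2 p * G p * K p + c3 p * K p ^ 2) * dist2 p p0 <= C * sqrt (G p ^ 2 + K p ^ 2) ^ 3.

Lemma curve_core : exists d1 rho (h : R -> R), 0 < d1 /\ d1 <= rho /\ rho <= r0 /\ h x0 = y0 /\
  (forall t, Rabs (t - x0) < d1 -> ex_derive h t /\ continuous (Derive h) t) /\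
  (forall q, (Rabs (fst q - x0) < d1 /\ Rabs (snd q - y0) < rho /\ G q = 0 /\ K q = 0) <->
             (Rabs (fst q - x0) < d1 /\ snd q = h (fst q))).
Proof.
  set (a := Gy p0). set (b := Ky p0). set (gx := Gx p0). set (kx := Kx p0).
  set (d1 := c1 p0). set (d2 := c2 p0). set (d3 := c3 p0).
  set (E := d2 * a + 2 * d3 * b).
  set (lam := (1 - d3) / E).
  destruct det_cl as [K3f HK3].
  set (K1 := K3f kx a b gx).
  destruct Phi_cl as [Kf HKf].
  set (K2 := Kf lam d1 d2 d3 a b).
  assert (Haa : 0 < Rabs a) by (apply Rabs_pos_lt; exact Ha).
  set (W := ((Rabs a + 1) * Rabs lam) ^ 2 + (1 + (Rabs b + 1) * Rabs lam) ^ 2).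
  assert (HW : 1 <= W).
  { unfold W. assert (0 <= (Rabs b + 1) * Rabs lam) by (apply Rmult_le_pos; [assert (0 <= Rabs b) by apply Rabs_pos; lra| apply Rabs_pos]).
    assert (0 <= ((Rabs a + 1) * Rabs lam) ^ 2) by apply pow2_ge_0. nra. }
  set (M1 := Rabs gx + 1).
  assert (HM1 : 1 <= M1) by (unfold M1; assert (0 <= Rabs gx) by apply Rabs_pos; lra).
  set (L' := 2 * Rabs K1 / Rabs a).
  assert (HL' : 0 <= L') by (unfold L'; apply Rmult_le_pos; [assert (0 <= Rabs K1) by apply Rabs_pos; lra| left; apply Rinv_0_lt_compat; lra]).
  set (CW := 2 * C * (W * sqrt W) * L').
  assert (HCW : 0 <= CW).
  { unfold CW. assert (0 <= sqrt W) by apply sqrt_pos. apply Rmult_le_pos; [|lra]. apply Rmult_le_pos; nra. }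
  set (S := 1 + 2 / Rabs a + 2 * Rabs K2 + 2 * Rabs lam * L' + 2 * CW).
  assert (Hs1 : 0 <= 2 / Rabs a) by (unfold Rdiv; apply Rmult_le_pos; [lra| left; apply Rinv_0_lt_compat; lra]).
  assert (Hs2 : 0 <= Rabs K2) by apply Rabs_pos.
  assert (Hs3 : 0 <= Rabs lam * L') by (apply Rmult_le_pos; [apply Rabs_pos|lra]).
  assert (HS : 1 <= S) by (unfold S; lra).
  set (e := / S).
  assert (He0 : 0 < e) by (unfold e; apply Rinv_0_lt_compat; lra).
  assert (HeS : e * S = 1) by (unfold e; field; lra).
  assert (HeSle : forall s, 0 <= s -> s <= S -> e * s <= 1).
  { intros s Hs1' Hs2'. rewrite <- HeS. apply Rmult_le_compat_l; lra. }
  assert (He1 : e <= 1) by (rewrite <- (Rmult_1_r e); apply HeSle; lra).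
  assert (He2 : e <= Rabs a / 2).
  { assert (e * (2 / Rabs a) <= 1) by (apply HeSle; unfold S; lra).
    unfold Rdiv in H. assert (e * 2 <= Rabs a) ; [|lra].
    apply (Rmult_le_compat_r (Rabs a)) in H; [|lra].
    rewrite Rmult_assoc, Rmult_assoc, Rinv_l in H; lra. }
  assert (He3 : e * Rabs K2 <= 1/2).
  { assert (e * (2 * Rabs K2) <= 1) by (apply HeSle; unfold S; lra). lra. }
  assert (He4 : e * (Rabs lam * L') <= 1/2).
  { assert (e * (2 * (Rabs lam * L')) <= 1) by (apply HeSle; unfold S; lra). lra. }
  assert (He5 : e * CW <= 1/2).
  { assert (e * (2 * CW) <= 1) by (apply HeSle; unfold S; lra). lra. }
  destruct (cont_list (Gx :: Gy :: Kx :: Ky :: c1 :: c2 :: c3 :: nil) p0 e He0) as [dc [Hdc Hc]].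
  { intros f Hf. simpl in Hf. 
    assert (box p0 p0 r0) by (split; rewrite Rminus_diag, Rabs_R0; lra).
    destruct Hf as [<-|[<-|[<-|[<-|[<-|[<-|[<-|[]]]]]]]]; auto. }
  set (rho := Rmin r0 dc).
  assert (Hrho : 0 < rho) by (apply Rmin_glb_lt; lra).
  assert (Hrr0 : rho <= r0) by apply Rmin_l.
  assert (Hrdc : rho <= dc) by apply Rmin_r.
  assert (Bx : forall q, box p0 q rho -> box p0 q r0) by (intros; eapply box_mono; eauto).
  assert (CGx' : forall q, box p0 q rho -> Rabs (Gx q - gx) <= e).
  { intros q Hq. apply (Hc q (box_mono _ _ _ _ Hq Hrdc)). simpl; auto. }
  assert (CGy' : forall q, box p0 q rho -> Rabs (Gy q - a) <= e).
  { intros q Hq. apply (Hc q (box_mono _ _ _ _ Hq Hrdc)). simpl; auto. }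
  assert (CKx' : forall q, box p0 q rho -> Rabs (Kx q - kx) <= e).
  { intros q Hq. apply (Hc q (box_mono _ _ _ _ Hq Hrdc)). simpl; auto. }
  assert (CKy' : forall q, box p0 q rho -> Rabs (Ky q - b) <= e).
  { intros q Hq. apply (Hc q (box_mono _ _ _ _ Hq Hrdc)). simpl; auto 10. }
  assert (Cc1' : forall q, box p0 q rho -> Rabs (c1 q - d1) <= e).
  { intros q Hq. apply (Hc q (box_mono _ _ _ _ Hq Hrdc)). simpl; auto 10. }
  assert (Cc2' : forall q, box p0 q rho -> Rabs (c2 q - d2) <= e).
  { intros q Hq. apply (Hc q (box_mono _ _ _ _ Hq Hrdc)). simpl; auto 10. }
  assert (Cc3' : forall q, box p0 q rho -> Rabs (c3 q - d3) <= e).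
  { intros q Hq. apply (Hc q (box_mono _ _ _ _ Hq Hrdc)). simpl; auto 10. }
  clear Hc.
  assert (Gy_pos : forall q, box p0 q rho -> a * Gy q >= a * a / 2 /\ Rabs a / 2 <= Rabs (Gy q)).
  { intros q Hq. specialize (CGy' q Hq). apply abs_le_inv in CGy'.
    revert He2. unfold Rabs. destruct (Rcase_abs a); destruct (Rcase_abs (Gy q)); intros; split; nra. }
  assert (Gx_bd : forall q, box p0 q rho -> Rabs (Gx q) <= M1).
  { intros q Hq. specialize (CGx' q Hq). unfold M1.
    replace (Gx q) with ((Gx q - gx) + gx) by ring. eapply Rle_trans; [apply Rabs_triang|]. lra. }
  assert (Habs0 : forall z, Rabs (z - z) = 0) by (intros; rewrite Rminus_diag; apply Rabs_R0).
  set (eta := rho / 2).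
  assert (Heta : 0 < eta) by (unfold eta; lra).
  assert (Heta2 : eta < rho) by (unfold eta; lra).
  assert (Heta3 : rho = 2 * eta) by (unfold eta; lra).
  set (del := Rmin eta (Rabs a * eta / (2 * M1))).
  assert (Hdel : 0 < del).
  { apply Rmin_glb_lt; auto. unfold Rdiv. apply Rmult_lt_0_compat; [nra| apply Rinv_0_lt_compat; lra]. }
  assert (Hdel1 : del <= eta) by apply Rmin_l.
  assert (Hdel2 : del * (2 * M1) <= Rabs a * eta).
  { assert (del <= Rabs a * eta / (2 * M1)) by apply Rmin_r.
    apply (Rmult_le_compat_r (2 * M1)) in H; [|lra]. unfold Rdiv in H.
    rewrite Rmult_assoc, Rinv_l in H; lra. }
  assert (Send : forall x, Rabs (x - x0) < del -> a * G (x, y0 + eta) > 0 /\ a * G (x, y0 - eta) < 0).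
  { intros x Hx.
    assert (Ry1 : Rabs (y0 + eta - y0) = eta) by (replace (y0 + eta - y0) with eta by ring; apply Rabs_right; lra).
    assert (Ry2 : Rabs (y0 - eta - y0) = eta) by (replace (y0 - eta - y0) with (- eta) by ring; rewrite Rabs_Ropp; apply Rabs_right; lra).
    split.
    - destruct (mvt_y G Gy p0 r0 HGy x0 y0 (y0 + eta)) as [c [Hc Ec]]; simpl; try rewrite Habs0; try rewrite Ry1; try rewrite Ry2; try lra.
      destruct (mvt_x G Gx p0 r0 HGx x0 x (y0 + eta)) as [c' [Hc' Ec']]; simpl; try rewrite Habs0; try rewrite Ry1; try rewrite Ry2; try lra.
      simpl in HG0. rewrite HG0 in Ec.
      apply betw_le in Hc. apply betw_le in Hc'. try rewrite Ry1 in Hc; try rewrite Ry2 in Hc.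
      assert (B1 : box p0 (x0, c) rho) by (split; simpl; [rewrite Habs0|]; lra).
      assert (B2 : box p0 (c', y0 + eta) rho) by (split; simpl; lra).
      replace (G (x, y0 + eta)) with (Gy (x0, c) * eta + Gx (c', y0 + eta) * (x - x0)) by lra.
      apply (sign_aux a _ _ _ M1 eta del); auto; try lra.
      all: try (apply Gy_pos; auto); try (apply Gx_bd; auto).
    - destruct (mvt_y G Gy p0 r0 HGy x0 y0 (y0 - eta)) as [c [Hc Ec]]; simpl; try rewrite Habs0; try rewrite Ry1; try rewrite Ry2; try lra.
      destruct (mvt_x G Gx p0 r0 HGx x0 x (y0 - eta)) as [c' [Hc' Ec']]; simpl; try rewrite Habs0; try rewrite Ry1; try rewrite Ry2; try lra.
      simpl in HG0. rewrite HG0 in Ec.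
      apply betw_le in Hc. apply betw_le in Hc'. try rewrite Ry1 in Hc; try rewrite Ry2 in Hc.
      assert (B1 : box p0 (x0, c) rho) by (split; simpl; [rewrite Habs0|]; lra).
      assert (B2 : box p0 (c', y0 - eta) rho) by (split; simpl; lra).
      replace (G (x, y0 - eta)) with (- (Gy (x0, c) * eta + Gx (c', y0 - eta) * (x0 - x))) by lra.
      assert (a * (Gy (x0, c) * eta + Gx (c', y0 - eta) * (x0 - x)) > 0); [|lra].
      apply (sign_aux a _ _ _ M1 eta del); auto; try lra.
      all: try (apply Gy_pos; auto); try (apply Gx_bd; auto); try (rewrite Rabs_minus_sym; auto). }
  set (h := fun x => epsilon (inhabits 0) (fun y => Rabs (y - y0) <= eta /\ G (x, y) = 0)).
  assert (hspec : forall x, Rabs (x - x0) < del -> Rabs (h x - y0) <= eta /\ G (x, h x) = 0).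
  { intros x Hx. unfold h. apply epsilon_spec.
    destruct (Send x Hx) as [S1 S2].
    destruct (Ranalysis5.IVT_interv (fun y => a * G (x, y)) (y0 - eta) (y0 + eta)) as [z [Hz Ez]].
    - intros c Hc. apply (derive_contpt _ _ (a * Gy (x, c))). apply is_derive_scal.
      apply (HGy (x, c)). split; simpl.
      + assert (Rabs (x - x0) < r0) by lra. exact H.
      + apply Rabs_def1; lra.
    - lra.
    - exact S2.
    - exact S1.
    - exists z. split. apply Rabs_le; lra.
      apply Rmult_integral in Ez. destruct Ez; [contradiction|auto]. }
  assert (uniq : forall x y1 y2, Rabs (x - x0) < rho -> Rabs (y1 - y0) < rho -> Rabs (y2 - y0) < rho ->
     G (x, y1) = 0 -> G (x, y2) = 0 -> y1 = y2).
  { intros x y1 y2 Hx H1 H2 E1 E2.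
    destruct (mvt_y G Gy p0 r0 HGy x y1 y2) as [c [Hc Ec]]; simpl; try lra.
    assert (B : box p0 (x, c) rho) by (split; simpl; [lra| eapply betw_close; eauto]).
    destruct (Gy_pos _ B) as [_ Hg].
    rewrite E1, E2 in Ec.
    assert (Gy (x, c) <> 0) by (intro Z; rewrite Z, Rabs_R0 in Hg; lra).
    assert (Gy (x, c) * (y2 - y1) = 0) by lra.
    apply Rmult_integral in H0. destruct H0; [contradiction| lra]. }
  assert (hx0 : h x0 = y0).
  { destruct (hspec x0) as [A1 A2]. rewrite Habs0; auto.
    apply (uniq x0); auto; try rewrite Habs0; try lra. }
  assert (Hdel_r : del < rho) by lra.
  assert (hin : forall x, Rabs (x - x0) < del -> box p0 (x, h x) rho).
  { intros x Hx. destruct (hspec x Hx). split; simpl; lra. }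
  assert (hdiff : forall x x', Rabs (x - x0) < del -> Rabs (x' - x0) < del -> exists c d,
     betw x x' c /\ betw (h x) (h x') d /\ Gy (x, d) * (h x' - h x) = - (Gx (c, h x') * (x' - x))).
  { intros x x' Hx Hx'. destruct (hspec x Hx) as [S1 S2]. destruct (hspec x' Hx') as [S3 S4].
    destruct (mvt_x G Gx p0 r0 HGx x x' (h x')) as [c [Hc Ec]]; simpl; try lra.
    destruct (mvt_y G Gy p0 r0 HGy x (h x) (h x')) as [d [Hd Ed]]; simpl; try lra.
    exists c, d. split; [auto|split; [auto|]]. lra. }
  set (Lc := 2 * M1 / Rabs a).
  assert (HLc : 0 <= Lc) by (unfold Lc, Rdiv; apply Rmult_le_pos; [lra| left; apply Rinv_0_lt_compat; lra]).
  assert (hlip : forall x x', Rabs (x - x0) < del -> Rabs (x' - x0) < del -> Rabs (h x' - h x) <= Lc * Rabs (x' - x)).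
  { intros x x' Hx Hx'. destruct (hdiff x x' Hx Hx') as [c [d [Hc [Hd Ed]]]].
    assert (B1 : box p0 (x, d) rho).
    { destruct (hspec x Hx), (hspec x' Hx'). split; simpl; [lra|]. eapply betw_close; eauto; lra. }
    assert (B2 : box p0 (c, h x') rho).
    { destruct (hspec x' Hx'). split; simpl; [|lra]. eapply betw_close; eauto; lra. }
    destruct (Gy_pos _ B1) as [_ G1]. assert (G2 := Gx_bd _ B2).
    assert (E2 : Rabs (Gy (x, d)) * Rabs (h x' - h x) = Rabs (Gx (c, h x')) * Rabs (x' - x)).
    { rewrite <- !Rabs_mult, Ed, Rabs_Ropp. reflexivity. }
    assert (E3 : Rabs a / 2 * Rabs (h x' - h x) <= M1 * Rabs (x' - x)).
    { assert (0 <= Rabs (h x' - h x)) by apply Rabs_pos. assert (0 <= Rabs (x' - x)) by apply Rabs_pos.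
      assert (Rabs a / 2 * Rabs (h x' - h x) <= Rabs (Gy (x, d)) * Rabs (h x' - h x)) by (apply Rmult_le_compat_r; lra).
      assert (Rabs (Gx (c, h x')) * Rabs (x' - x) <= M1 * Rabs (x' - x)) by (apply Rmult_le_compat_r; lra).
      lra. }
    unfold Lc. unfold Rdiv.
    replace (Rabs (h x' - h x)) with ((Rabs a / 2 * Rabs (h x' - h x)) * (2 / Rabs a)) by (field; lra).
    replace (2 * M1 * / Rabs a * Rabs (x' - x)) with ((M1 * Rabs (x' - x)) * (2 / Rabs a)) by (field; lra).
    apply Rmult_le_compat_r; auto. }
  assert (Qc : forall x, Rabs (x - x0) < del -> forall eps, 0 < eps -> exists dd, 0 < dd /\ forall p q,
     box (x, h x) p dd -> box (x, h x) q dd -> box p0 p rho -> box p0 q rho ->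
     Rabs (Gx p / Gy q - Gx (x, h x) / Gy (x, h x)) < eps).
  { intros x Hx eps Heps.
    assert (Bx0 := hin x Hx).
    set (A0 := Gx (x, h x)). set (B0 := Gy (x, h x)).
    set (m := Rabs a / 2).
    assert (Hm : 0 < m) by (unfold m; lra).
    assert (HB0 : m <= Rabs B0) by (apply Gy_pos; auto).
    set (eps' := eps * (m * m) / (Rabs B0 + Rabs A0 + 1)).
    assert (HA0 : 0 <= Rabs A0) by apply Rabs_pos.
    assert (Heps' : 0 < eps') by (unfold eps', Rdiv; apply Rmult_lt_0_compat; [apply Rmult_lt_0_compat; [lra| apply Rmult_lt_0_compat; lra]| apply Rinv_0_lt_compat; lra]).
    destruct (cont_at_le Gx (x, h x) eps' (CGx _ (Bx _ Bx0)) Heps') as [da [Hda Ea]].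
    destruct (cont_at_le Gy (x, h x) eps' (CGy _ (Bx _ Bx0)) Heps') as [db [Hdb Eb]].
    exists (Rmin da db). split; [apply Rmin_glb_lt; auto|].
    intros p q Hp Hq Hp0 Hq0.
    assert (Ha1 : Rabs (Gx p - A0) <= eps') by (apply Ea; eapply box_mono; eauto; apply Rmin_l).
    assert (Hb1 : Rabs (Gy q - B0) <= eps') by (apply Eb; eapply box_mono; eauto; apply Rmin_r).
    assert (Hq1 : m <= Rabs (Gy q)) by (apply Gy_pos; auto).
    eapply Rle_lt_trans; [apply (div_close _ _ _ _ eps' m); auto|].
    unfold eps'. 
    assert (Hmm : 0 < m * m) by (apply Rmult_lt_0_compat; lra).
    replace (eps * (m * m) / (Rabs B0 + Rabs A0 + 1) * (Rabs B0 + Rabs A0) / (m * m)) with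
      (eps * ((Rabs B0 + Rabs A0) / (Rabs B0 + Rabs A0 + 1))) by (field; lra).
    assert ((Rabs B0 + Rabs A0) / (Rabs B0 + Rabs A0 + 1) < 1).
    { apply (Rmult_lt_reg_r (Rabs B0 + Rabs A0 + 1)); [lra|]. unfold Rdiv. rewrite Rmult_assoc, Rinv_l; lra. }
    assert (0 <= (Rabs B0 + Rabs A0) / (Rabs B0 + Rabs A0 + 1)).
    { unfold Rdiv. apply Rmult_le_pos; [lra| left; apply Rinv_0_lt_compat; lra]. }
    rewrite <- (Rmult_1_r eps) at 2. apply Rmult_lt_compat_l; lra. }
  assert (Hlc1 : forall z, 0 <= z -> z <= z * (1 + Lc)) by (intros z Hz; assert (0 <= z * Lc) by (apply Rmult_le_pos; lra); lra).
  assert (small : forall z dd, Rabs z < Rmin (del - Rabs (x0 - x0)) dd -> True) by auto.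
  assert (hder : forall x, Rabs (x - x0) < del -> is_derive h x (- (Gx (x, h x) / Gy (x, h x)))).
  { intros x Hx. apply is_derive_Reals. intros eps Heps.
    destruct (Qc x Hx eps Heps) as [dd [Hdd Edd]].
    set (dl := Rmin (del - Rabs (x - x0)) (dd / (1 + Lc))).
    assert (Hdl : 0 < dl) by (apply Rmin_glb_lt; [lra| unfold Rdiv; apply Rmult_lt_0_compat; [lra|apply Rinv_0_lt_compat; lra]]).
    exists (mkposreal dl Hdl). intros hh Hh0 Hhh. simpl in Hhh.
    assert (Hh1 : Rabs hh < del - Rabs (x - x0)) by (eapply Rlt_le_trans; [exact Hhh| apply Rmin_l]).
    assert (Hh2 : Rabs hh * (1 + Lc) < dd).
    { assert (Rabs hh < dd / (1 + Lc)) by (eapply Rlt_le_trans; [exact Hhh| apply Rmin_r]).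
      apply (Rmult_lt_compat_r (1 + Lc)) in H; [|lra]. unfold Rdiv in H. rewrite Rmult_assoc, Rinv_l in H; lra. }
    assert (Hhp : 0 <= Rabs hh) by apply Rabs_pos.
    assert (Hh3 := Hlc1 _ Hhp).
    assert (Hx' : Rabs (x + hh - x0) < del).
    { replace (x + hh - x0) with ((x - x0) + hh) by ring. eapply Rle_lt_trans; [apply Rabs_triang|]. lra. }
    destruct (hdiff x (x + hh) Hx Hx') as [c [d [Hc [Hd Ed]]]].
    assert (Hl := hlip x (x + hh) Hx Hx').
    replace (x + hh - x) with hh in Hl, Ed by ring.
    assert (Bp0 : box p0 (c, h (x + hh)) rho).
    { split; simpl; [eapply betw_close; eauto; lra| destruct (hspec _ Hx'); lra]. }
    assert (Bq0 : box p0 (x, d) rho).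
    { destruct (hspec _ Hx'), (hspec _ Hx). split; simpl; [lra| eapply betw_close; eauto; lra]. }
    apply betw_le in Hc. apply betw_le in Hd. replace (x + hh - x) with hh in Hc by ring.
    assert (Bp : box (x, h x) (c, h (x + hh)) dd) by (split; simpl; lra).
    assert (Bq : box (x, h x) (x, d) dd) by (split; simpl; rewrite ?Habs0; lra).
    specialize (Edd _ _ Bp Bq Bp0 Bq0).
    destruct (Gy_pos _ Bq0) as [_ Hg].
    assert (Gy (x, d) <> 0) by (intro Z; rewrite Z, Rabs_R0 in Hg; lra).
    replace ((h (x + hh) - h x) / hh - - (Gx (x, h x) / Gy (x, h x))) with
      (- (Gx (c, h (x + hh)) / Gy (x, d) - Gx (x, h x) / Gy (x, h x))).
    + rewrite Rabs_Ropp; exact Edd.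
    + assert (Eh : h (x + hh) - h x = - (Gx (c, h (x + hh)) * hh) / Gy (x, d)) by (rewrite <- Ed; field; auto).
      rewrite Eh. field. destruct (Gy_pos _ (hin x Hx)) as [_ Hg2]. repeat split; auto. intro Z; rewrite Z, Rabs_R0 in Hg2; lra. }
  assert (hcont : forall x, Rabs (x - x0) < del -> continuous (Derive h) x).
  { intros x Hx. apply (continuous_ext_loc _ (fun t => - (Gx (t, h t) / Gy (t, h t)))).
    - apply locally_R_intro. exists (del - Rabs (x - x0)). split; [lra|]. intros y Hy.
      symmetry; apply is_derive_unique; apply hder.
      replace (y - x0) with ((y - x) + (x - x0)) by ring. eapply Rle_lt_trans; [apply Rabs_triang|]. lra.
    - apply cont_R_intro. intros eps Heps. destruct (Qc x Hx eps Heps) as [dd [Hdd Edd]].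
      exists (Rmin (del - Rabs (x - x0)) (dd / (1 + Lc))). split.
      { apply Rmin_glb_lt; [lra| unfold Rdiv; apply Rmult_lt_0_compat; [lra|apply Rinv_0_lt_compat; lra]]. }
      intros t Ht.
      assert (Hh1 : Rabs (t - x) < del - Rabs (x - x0)) by (eapply Rlt_le_trans; [exact Ht| apply Rmin_l]).
      assert (Hh2 : Rabs (t - x) * (1 + Lc) < dd).
      { assert (Rabs (t - x) < dd / (1 + Lc)) by (eapply Rlt_le_trans; [exact Ht| apply Rmin_r]).
        apply (Rmult_lt_compat_r (1 + Lc)) in H; [|lra]. unfold Rdiv in H. rewrite Rmult_assoc, Rinv_l in H; lra. }
      assert (Hhp : 0 <= Rabs (t - x)) by apply Rabs_pos.
      assert (Hh3 := Hlc1 _ Hhp).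
      assert (Ht' : Rabs (t - x0) < del).
      { replace (t - x0) with ((t - x) + (x - x0)) by ring. eapply Rle_lt_trans; [apply Rabs_triang|]. lra. }
      assert (Hl := hlip x t Hx Ht').
      assert (Bp : box (x, h x) (t, h t) dd) by (split; simpl; lra).
      specialize (Edd _ _ Bp Bp (hin _ Ht') (hin _ Ht')).
      assert (Eab : forall u v, Rabs (- u - - v) = Rabs (u - v)).
      { intros u v. replace (- u - - v) with (- (u - v)) by ring. apply Rabs_Ropp. }
      rewrite Eab. exact Edd. }
  assert (HD' : d1 * a ^ 2 + d2 * a * b + d3 * b ^ 2 = 0) by exact HD.
  assert (Hdet' : kx * a - b * gx = 0) by (unfold kx, a, b, gx; lra).
  assert (HE' : E <> 0) by exact HE.
  assert (Phi1 : Phi lam d1 d2 d3 a b = 1).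
  { assert (Phi lam d1 d2 d3 a b = lam ^ 2 * (d1 * a ^ 2 + d2 * a * b + d3 * b ^ 2) + lam * E + d3) by (unfold Phi, E; ring).
    rewrite H, HD'. unfold lam. field. exact HE'. }
  assert (Kvan : forall x1, Rabs (x1 - x0) < del -> K (x1, h x1) = 0).
  { intros x1 Hx1. destruct (hspec x1 Hx1) as [Hh1 Gh1].
    set (phi := K (x1, h x1)).
    destruct (Req_dec phi 0) as [|Hphi]; [auto|exfalso].
    destruct (mvt_xy K Kx Ky p0 r0 HKx HKy x1 (h x1)) as [ck [dk [Hck [Hdk Ek]]]]; simpl; try lra.
    destruct (mvt_xy G Gx Gy p0 r0 HGx HGy x1 (h x1)) as [cg [dg [Hcg [Hdg Eg]]]]; simpl; try lra.
    simpl in Ek, Eg. rewrite HK0 in Ek. rewrite HG0, Gh1 in Eg. fold phi in Ek.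
    apply betw_le in Hck. apply betw_le in Hdk. apply betw_le in Hcg. apply betw_le in Hdg. simpl in Hck, Hdk, Hcg, Hdg.
    assert (B1 : box p0 (ck, h x1) rho) by (split; simpl; lra).
    assert (B2 : box p0 (x0, dk) rho) by (split; simpl; rewrite ?Habs0; lra).
    assert (B3 : box p0 (cg, h x1) rho) by (split; simpl; lra).
    assert (B4 : box p0 (x0, dg) rho) by (split; simpl; rewrite ?Habs0; lra).
    set (Kx' := Kx (ck, h x1)) in *. set (Ky' := Ky (x0, dk)) in *. set (Gx' := Gx (cg, h x1)) in *. set (Gy' := Gy (x0, dg)) in *.
    assert (HC1 := HK3 e Kx' Gy' Ky' Gx' kx a b gx (conj (Rlt_le _ _ He0) He1)
      (cl_var _ _ _ (CKx' _ B1)) (cl_var _ _ _ (CGy' _ B4)) (cl_var _ _ _ (CKy' _ B2)) (cl_var _ _ _ (CGx' _ B3))).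
    fold K1 in HC1. unfold cl in HC1. rewrite Hdet', Rminus_0_r in HC1.
    assert (Eq1 : phi * Gy' = (Kx' * Gy' - Ky' * Gx') * (x1 - x0)).
    { assert (phi * Gy' - (Kx' * Gy' - Ky' * Gx') * (x1 - x0) =
        Gy' * (phi - 0 - (Kx' * (x1 - x0) + Ky' * (h x1 - y0))) + Ky' * (Gx' * (x1 - x0) + Gy' * (h x1 - y0))) by ring.
      rewrite Ek, <- Eg in H. lra. }
    destruct (Gy_pos _ B4) as [_ HGy'].
    assert (Hphi_s : Rabs phi <= e * L' * Rabs (x1 - x0)).
    { assert (A1 : Rabs phi * Rabs Gy' <= e * Rabs K1 * Rabs (x1 - x0)).
      { rewrite <- Rabs_mult, Eq1, Rabs_mult. apply Rmult_le_compat_r; [apply Rabs_pos|].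
        eapply Rle_trans; [exact HC1|]. apply Rmult_le_compat_l; [lra| apply RRle_abs]. }
      assert (A2 : Rabs phi * (Rabs a / 2) <= Rabs phi * Rabs Gy') by (apply Rmult_le_compat_l; [apply Rabs_pos|exact HGy']).
      unfold L'. 
      replace (Rabs phi) with (Rabs phi * (Rabs a / 2) * (2 / Rabs a)) by (field; lra).
      replace (e * (2 * Rabs K1 / Rabs a) * Rabs (x1 - x0)) with (e * Rabs K1 * Rabs (x1 - x0) * (2 / Rabs a)) by (field; lra).
      apply Rmult_le_compat_r; [unfold Rdiv; left; apply Rmult_lt_0_compat; [lra|apply Rinv_0_lt_compat; lra]| lra]. }
    assert (Hlam_s : Rabs (lam * phi) <= Rabs (x1 - x0) / 2).
    { rewrite Rabs_mult.
      assert (Rabs lam * Rabs phi <= Rabs lam * (e * L' * Rabs (x1 - x0))) by (apply Rmult_le_compat_l; [apply Rabs_pos| exact Hphi_s]).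
      assert ((e * (Rabs lam * L')) * Rabs (x1 - x0) <= (1/2) * Rabs (x1 - x0)) by (apply Rmult_le_compat_r; [apply Rabs_pos| exact He4]).
      replace (Rabs lam * (e * L' * Rabs (x1 - x0))) with ((e * (Rabs lam * L')) * Rabs (x1 - x0)) in H by ring.
      lra. }
    set (y' := h x1 + lam * phi).
    assert (Hy' : Rabs (y' - y0) < rho).
    { unfold y'. replace (h x1 + lam * phi - y0) with ((h x1 - y0) + lam * phi) by ring.
      eapply Rle_lt_trans; [apply Rabs_triang|]. lra. }
    destruct (mvt_y G Gy p0 r0 HGy x1 (h x1) y') as [d3' [Hd3 Ed3]]; simpl; try lra.
    destruct (mvt_y K Ky p0 r0 HKy x1 (h x1) y') as [d4' [Hd4 Ed4]]; simpl; try lra.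
    assert (B5 : box p0 (x1, d3') rho) by (split; simpl; [lra| eapply betw_close; eauto; lra]).
    assert (B6 : box p0 (x1, d4') rho) by (split; simpl; [lra| eapply betw_close; eauto; lra]).
    assert (Bp : box p0 (x1, y') rho) by (split; simpl; lra).
    set (A' := Gy (x1, d3')) in *. set (B' := Ky (x1, d4')) in *.
    assert (EGp : G (x1, y') = A' * lam * phi).
    { rewrite Gh1 in Ed3. replace (y' - h x1) with (lam * phi) in Ed3 by (unfold y'; ring). lra. }
    assert (EKp : K (x1, y') = phi + B' * lam * phi).
    { fold phi in Ed4. replace (y' - h x1) with (lam * phi) in Ed4 by (unfold y'; ring). lra. }
    set (p := (x1, y')) in *.
    set (P1 := Phi lam (c1 p) (c2 p) (c3 p) A' B').
    assert (EN : c1 p * G p ^ 2 + c2 p * G p * K p + c3 p * K p ^ 2 = phi ^ 2 * P1).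
    { rewrite EGp, EKp. unfold P1, Phi. ring. }
    assert (HP := HKf e lam (c1 p) (c2 p) (c3 p) A' B' d1 d2 d3 a b (conj (Rlt_le _ _ He0) He1)
      (cl_var _ _ _ (Cc1' _ Bp)) (cl_var _ _ _ (Cc2' _ Bp)) (cl_var _ _ _ (Cc3' _ Bp))
      (cl_var _ _ _ (CGy' _ B5)) (cl_var _ _ _ (CKy' _ B6))).
    fold K2 in HP. fold P1 in HP. rewrite Phi1 in HP. unfold cl in HP.
    assert (HP1 : 1/2 <= P1).
    { apply abs_le_inv in HP. assert (e * K2 <= e * Rabs K2) by (apply Rmult_le_compat_l; [lra| apply RRle_abs]). lra. }
    assert (Hph2 : 0 < phi ^ 2) by (rewrite <- pow2_abs; apply pow_lt; apply Rabs_pos_lt; exact Hphi).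
    assert (Hnz : G p <> 0 \/ K p <> 0).
    { destruct (Req_dec (G p) 0) as [Z1|Z1]; [|left; exact Z1]. destruct (Req_dec (K p) 0) as [Z2|Z2]; [|right; exact Z2].
      exfalso. rewrite Z1, Z2 in EN. assert (phi ^ 2 * P1 > 0) by (apply Rmult_lt_0_compat; lra).
      assert (c1 p * 0 ^ 2 + c2 p * 0 * 0 + c3 p * 0 ^ 2 = 0) by ring. lra. }
    assert (HHp := HH p (Bx _ Bp) Hnz). rewrite EN in HHp.
    assert (Esq : G p ^ 2 + K p ^ 2 = phi ^ 2 * ((A' * lam) ^ 2 + (1 + B' * lam) ^ 2)) by (rewrite EGp, EKp; ring).
    assert (HA' : Rabs A' <= Rabs a + 1).
    { assert (Z : Rabs (A' - a) <= e) by exact (CGy' _ B5). replace A' with ((A' - a) + a) by ring. eapply Rle_trans; [apply Rabs_triang|]. lra. }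
    assert (HB' : Rabs B' <= Rabs b + 1).
    { assert (Z : Rabs (B' - b) <= e) by exact (CKy' _ B6). replace B' with ((B' - b) + b) by ring. eapply Rle_trans; [apply Rabs_triang|]. lra. }
    assert (Q2 : (A' * lam) ^ 2 + (1 + B' * lam) ^ 2 <= W).
    { unfold W. apply Rplus_le_compat; apply sq_le_abs.
      - rewrite Rabs_mult. apply Rmult_le_compat_r; [apply Rabs_pos| exact HA'].
      - eapply Rle_trans; [apply Rabs_triang|]. rewrite Rabs_R1, Rabs_mult.
        apply Rplus_le_compat_l. apply Rmult_le_compat_r; [apply Rabs_pos|exact HB']. }
    assert (S1 : sqrt (G p ^ 2 + K p ^ 2) <= Rabs phi * sqrt W).
    { rewrite Esq. rewrite <- (sqrt_pow2 (Rabs phi)) by apply Rabs_pos. rewrite <- sqrt_mult_alt by (apply pow2_ge_0).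
      apply sqrt_le_1_alt. rewrite pow2_abs. apply Rmult_le_compat_l; [apply pow2_ge_0| exact Q2]. }
    assert (S3 : sqrt (G p ^ 2 + K p ^ 2) ^ 3 <= Rabs phi ^ 3 * (W * sqrt W)).
    { replace (Rabs phi ^ 3 * (W * sqrt W)) with ((Rabs phi * sqrt W) ^ 3).
      - apply pow_incr. split; [apply sqrt_pos| exact S1].
      - assert (Sw : sqrt W * sqrt W = W) by (apply sqrt_sqrt; lra).
        replace ((Rabs phi * sqrt W) ^ 3) with (Rabs phi ^ 3 * (sqrt W * sqrt W) * sqrt W) by ring. rewrite Sw. ring. }
    assert (D1 : Rabs (x1 - x0) <= dist2 p p0) by exact (dist2_ge_x p p0).
    assert (L1 : Rabs phi ^ 2 * P1 * Rabs (x1 - x0) <= C * (Rabs phi ^ 3 * (W * sqrt W))).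
    { rewrite Rabs_mult in HHp. rewrite (Rabs_right (phi ^ 2)) in HHp by lra. rewrite (Rabs_right P1) in HHp by lra.
      rewrite pow2_abs. eapply Rle_trans; [|eapply Rle_trans; [exact HHp|]].
      - apply Rmult_le_compat_l; [apply Rmult_le_pos; lra| exact D1].
      - apply Rmult_le_compat_l; [lra| exact S3]. }
    apply (final_alg (Rabs phi) (Rabs (x1 - x0)) P1 C (W * sqrt W) (e * L')); auto.
    + apply Rabs_pos_lt; exact Hphi.
    + apply Rabs_pos.
    + lra.
    + apply Rmult_le_pos; [lra| apply sqrt_pos].
    + replace (2 * C * (W * sqrt W) * (e * L')) with (e * CW) by (unfold CW; ring). exact He5. }
  exists del, rho, h. split; [exact Hdel|]. split; [lra|]. split; [exact Hrr0|]. split; [exact hx0|]. split.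
  - intros t Ht. split; [eexists; apply hder; exact Ht| apply hcont; exact Ht].
  - intros [qx qy]. simpl. split.
    + intros [Hq1 [Hq2 [Gq Kq]]]. split; [exact Hq1|].
      destruct (hspec qx Hq1) as [S1 S2].
      apply (uniq qx); auto; lra.
    + intros [Hq1 Hq2]. subst qy. destruct (hspec qx Hq1) as [S1 S2].
      split; [exact Hq1|]. split; [lra|]. split; [exact S2| apply Kvan; exact Hq1].
Qed.

End Curve.


Lemma isd_eq (f : R -> R) (x d d' : R) : is_derive f x d -> d = d' -> is_derive f x d'.
Proof. intros H ->; exact H. Qed.

Lemma isd_plus (f g : R -> R) (x df dg : R) : is_derive f x df -> is_derive g x dg -> is_derive (fun t => f t + g t) x (df + dg).
Proof. intros Hf Hg. exact (is_derive_plus f g x df dg Hf Hg). Qed.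

Lemma isd_const (c x : R) : is_derive (fun _ => c) x 0.
Proof. exact (is_derive_const c x). Qed.

Lemma isd_id (x : R) : is_derive (fun t => t) x 1.
Proof. exact (is_derive_id x). Qed.

Lemma isd_minus_c (f : R -> R) (x df c : R) : is_derive f x df -> is_derive (fun t => f t - c) x df.
Proof. intros H. eapply isd_eq. apply (isd_plus f (fun _ => - c)); [exact H| apply isd_const]. ring. Qed.

Lemma isd_plus_c (f : R -> R) (x df c : R) : is_derive f x df -> is_derive (fun t => f t + c) x df.
Proof. intros H. eapply isd_eq. apply (isd_plus f (fun _ => c)); [exact H| apply isd_const]. ring. Qed.

Lemma isd_ext (f g : R -> R) (x d : R) : (forall t, f t = g t) -> is_derive f x d -> is_derive g x d.
Proof. intros E H. exact (is_derive_ext f g x d E H). Qed.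

Lemma isd_plus_id (f : R -> R) (x df : R) : is_derive f x df -> is_derive (fun t => f t + t) x (df + 1).
Proof. intros H. apply (isd_plus f (fun t => t)); [exact H| apply isd_id]. Qed.

Lemma isd_minus_id (f : R -> R) (x df : R) : is_derive f x df -> is_derive (fun t => f t - t) x (df - 1).
Proof. intros H.
  assert (H1 : is_derive (fun t => -1 * t) x (-1 * 1)) by (apply (is_derive_scal (fun t => t)); apply isd_id).
  apply (isd_ext (fun t => f t + -1 * t)). intros; ring.
  eapply isd_eq. apply (isd_plus f (fun t => -1 * t)); [exact H| exact H1]. ring. Qed.

Lemma nd_aux (f g : R -> R) (x df dg : R) : is_derive f x df -> is_derive g x dg -> 0 < f x ^ 2 + g x ^ 2 ->
  is_derive (fun t => sqrt (f t ^ 2 + g t ^ 2)) x ((2 * df * f x + 2 * dg * g x) / (2 * sqrt (f x ^ 2 + g x ^ 2))).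
Proof.
  intros Hf Hg Hp.
  assert (Hs : is_derive (fun t => f t ^ 2 + g t ^ 2) x (2 * df * f x + 2 * dg * g x)).
  { eapply isd_eq. apply isd_plus; apply is_derive_pow; eauto. simpl; ring. }
  exact (is_derive_sqrt _ _ _ Hs Hp).
Qed.

Lemma nd1 (f g : R -> R) (x df dg : R) : is_derive f x df -> is_derive g x dg -> 0 < f x ^ 2 + g x ^ 2 ->
  is_derive (fun t => f t / sqrt (f t ^ 2 + g t ^ 2)) x
   ((df * g x ^ 2 - f x * g x * dg) / sqrt (f x ^ 2 + g x ^ 2) ^ 3).
Proof.
  intros Hf Hg Hp.
  assert (Hq := nd_aux f g x df dg Hf Hg Hp).
  set (s := sqrt (f x ^ 2 + g x ^ 2)) in *.
  assert (Hs0 : 0 < s) by (apply sqrt_lt_R0; exact Hp).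
  assert (Hss : s * s = f x ^ 2 + g x ^ 2) by (apply sqrt_sqrt; lra).
  eapply isd_eq. apply (is_derive_div f (fun t => sqrt (f t ^ 2 + g t ^ 2)) x df _ Hf Hq).
  fold s; intro Z; lra.
  fold s. replace (df * g x ^ 2 - f x * g x * dg) with (df * (s * s) - f x * (f x * df + g x * dg)) by (rewrite Hss; ring).
  field. lra.
Qed.

Lemma nd2 (f g : R -> R) (x df dg : R) : is_derive f x df -> is_derive g x dg -> 0 < f x ^ 2 + g x ^ 2 ->
  is_derive (fun t => g t / sqrt (f t ^ 2 + g t ^ 2)) x
   ((dg * f x ^ 2 - f x * g x * df) / sqrt (f x ^ 2 + g x ^ 2) ^ 3).
Proof.
  intros Hf Hg Hp.
  assert (Hq := nd_aux f g x df dg Hf Hg Hp).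
  set (s := sqrt (f x ^ 2 + g x ^ 2)) in *.
  assert (Hs0 : 0 < s) by (apply sqrt_lt_R0; exact Hp).
  assert (Hss : s * s = f x ^ 2 + g x ^ 2) by (apply sqrt_sqrt; lra).
  eapply isd_eq. apply (is_derive_div g (fun t => sqrt (f t ^ 2 + g t ^ 2)) x dg _ Hg Hq).
  fold s; intro Z; lra.
  fold s. replace (dg * f x ^ 2 - f x * g x * df) with (dg * (s * s) - g x * (f x * df + g x * dg)) by (rewrite Hss; ring).
  field. lra.
Qed.


Definition Pf (u : R * R -> R) (p : R * R) := dx u p - snd p.
Definition Qf (u : R * R -> R) (p : R * R) := dy u p + fst p.
Definition Pxf (u : R * R -> R) (p : R * R) := dx (dx u) p.
Definition Pyf (u : R * R -> R) (p : R * R) := dy (dx u) p - 1.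
Definition Qxf (u : R * R -> R) (p : R * R) := dx (dy u) p + 1.
Definition Qyf (u : R * R -> R) (p : R * R) := dy (dy u) p.
Definition Nexpr u p := Qf u p ^ 2 * Pxf u p - Pf u p * Qf u p * (Pyf u p + Qxf u p) + Pf u p ^ 2 * Qyf u p.

Lemma derivs O u p : C2_on O u -> O p ->
  is_derive (fun t => Pf u (t, snd p)) (fst p) (Pxf u p) /\
  is_derive (fun t => Pf u (fst p, t)) (snd p) (Pyf u p) /\
  is_derive (fun t => Qf u (t, snd p)) (fst p) (Qxf u p) /\
  is_derive (fun t => Qf u (fst p, t)) (snd p) (Qyf u p).
Proof.
  intros [H0 [H1 H2]] Op.
  destruct (H1 p Op) as [_ [ex1 [ey1 _]]]. destruct (H2 p Op) as [_ [ex2 [ey2 _]]].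
  split; [|split; [|split]].
  - exact (isd_minus_c (fun t => dx u (t, snd p)) (fst p) _ (snd p) (Derive_correct _ _ ex1)).
  - exact (isd_minus_id (fun t => dx u (fst p, t)) (snd p) _ (Derive_correct _ _ ey1)).
  - exact (isd_plus_id (fun t => dy u (t, snd p)) (fst p) _ (Derive_correct _ _ ex2)).
  - exact (isd_plus_c (fun t => dy u (fst p, t)) (snd p) _ (fst p) (Derive_correct _ _ ey2)).
Qed.

Lemma cont_of_continuous (f : R * R -> R) p : continuous f p -> cont_at f p.
Proof.
  intros H eps Heps. apply filterlim_locally with (eps := mkposreal eps Heps) in H.
  destruct H as [d Hd]. exists d. split; [apply cond_pos|]. intros q Hq. apply (Hd q). exact Hq.
Qed.

Lemma cont_R_elim (f : R -> R) x : continuous f x -> forall eps, 0 < eps -> exists d, 0 < d /\ forall t, Rabs (t - x) < d -> Rabs (f t - f x) < eps.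
Proof.
  intros H eps Heps. apply filterlim_locally with (eps := mkposreal eps Heps) in H.
  destruct H as [d Hd]. exists d. split; [apply cond_pos|]. intros t Ht. apply (Hd t). exact Ht.
Qed.

Lemma cont_at_plus f g p : cont_at f p -> cont_at g p -> cont_at (fun q => f q + g q) p.
Proof.
  intros Hf Hg eps Heps.
  destruct (Hf (eps/2)) as [d1 [Hd1 E1]]; [lra|]. destruct (Hg (eps/2)) as [d2 [Hd2 E2]]; [lra|].
  exists (Rmin d1 d2). split; [apply Rmin_glb_lt; auto|]. intros q Hq.
  specialize (E1 q (box_mono _ _ _ _ Hq (Rmin_l _ _))). specialize (E2 q (box_mono _ _ _ _ Hq (Rmin_r _ _))).
  replace (f q + g q - (f p + g p)) with ((f q - f p) + (g q - g p)) by ring.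
  eapply Rle_lt_trans; [apply Rabs_triang|]. lra.
Qed.

Lemma cont_at_opp f p : cont_at f p -> cont_at (fun q => - f q) p.
Proof. intros Hf eps Heps. destruct (Hf eps Heps) as [d [Hd E]]. exists d; split; auto.
  intros q Hq. replace (- f q - - f p) with (- (f q - f p)) by ring. rewrite Rabs_Ropp. auto. Qed.

Lemma cont_at_const c p : cont_at (fun _ => c) p.
Proof. intros eps Heps. exists 1; split; [lra|]. intros. rewrite Rminus_diag, Rabs_R0. lra. Qed.

Lemma cont_at_swap f p : cont_at f (snd p, fst p) -> cont_at (fun q => f (snd q, fst q)) p.
Proof. intros Hf eps Heps. destruct (Hf eps Heps) as [d [Hd E]]. exists d; split; auto.
  intros q [H1 H2]. apply E. split; simpl; auto. Qed.

Lemma conts O u p : C2_on O u -> O p ->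
  cont_at (Pxf u) p /\ cont_at (Pyf u) p /\ cont_at (Qxf u) p /\ cont_at (Qyf u) p.
Proof.
  intros [H0 [H1 H2]] Op.
  destruct (H1 p Op) as [_ [_ [_ [c1 c2]]]]. destruct (H2 p Op) as [_ [_ [_ [c3 c4]]]].
  split; [|split; [|split]].
  - apply cont_of_continuous; exact c1.
  - apply (cont_at_plus (dy (dx u)) (fun _ => -1)); [apply cont_of_continuous; exact c2| apply cont_at_const].
  - apply (cont_at_plus (dx (dy u)) (fun _ => 1)); [apply cont_of_continuous; exact c3| apply cont_at_const].
  - apply cont_of_continuous; exact c4.
Qed.

Lemma schwarz_at O u x0 y0 : open O -> O (x0, y0) -> C2_on O u -> dx (dy u) (x0, y0) = dy (dx u) (x0, y0).
Proof.
  intros HO H0 [C0 [C1 C2]].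
  destruct (HO _ H0) as [eps Heps].
  destruct (C1 _ H0) as [_ [_ [_ [_ Ca]]]]. destruct (C2 _ H0) as [_ [_ [_ [Cb _]]]].
  apply (Schwarz (fun a b => u (a, b)) x0 y0).
  - exists eps. intros a b Ha Hb.
    assert (Oab : O (a, b)) by (apply Heps; split; simpl; auto).
    destruct (C0 _ Oab) as [_ [e1 [e2 _]]]. destruct (C1 _ Oab) as [_ [_ [e4 _]]].
    destruct (C2 _ Oab) as [_ [e3 _]].
    split; [exact e1|split; [exact e2| split; [exact e3| exact e4]]].
  - apply continuity_2d_pt_filterlim. exact Cb.
  - apply continuity_2d_pt_filterlim. exact Ca.
Qed.

Lemma Hformula O u p : C2_on O u -> O p -> (Pf u p <> 0 \/ Qf u p <> 0) ->
  Hcurv u p = Nexpr u p / sqrt (Pf u p ^ 2 + Qf u p ^ 2) ^ 3.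
Proof.
  intros HC Op Hnz. destruct p as [x y].
  destruct (derivs O u (x, y) HC Op) as [D1 [D2 [D3 D4]]]. simpl in D1, D2, D3, D4.
  assert (Hpos : 0 < Pf u (x, y) ^ 2 + Qf u (x, y) ^ 2).
  { destruct Hnz as [Z|Z].
    - assert (0 < Pf u (x, y) ^ 2) by (rewrite <- pow2_abs; apply pow_lt; apply Rabs_pos_lt; exact Z).
      assert (0 <= Qf u (x, y) ^ 2) by apply pow2_ge_0. lra.
    - assert (0 < Qf u (x, y) ^ 2) by (rewrite <- pow2_abs; apply pow_lt; apply Rabs_pos_lt; exact Z).
      assert (0 <= Pf u (x, y) ^ 2) by apply pow2_ge_0. lra. }
  assert (E1 := nd1 (fun t => Pf u (t, y)) (fun t => Qf u (t, y)) x _ _ D1 D3 Hpos).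
  assert (E2 := nd2 (fun t => Pf u (x, t)) (fun t => Qf u (x, t)) y _ _ D2 D4 Hpos).
  unfold Hcurv.
  assert (F1 : dx (N1 u) (x, y) = (Pxf u (x, y) * Qf u (x, y) ^ 2 - Pf u (x, y) * Qf u (x, y) * Qxf u (x, y)) / sqrt (Pf u (x, y) ^ 2 + Qf u (x, y) ^ 2) ^ 3).
  { apply is_derive_unique. exact E1. }
  assert (F2 : dy (N2 u) (x, y) = (Qyf u (x, y) * Pf u (x, y) ^ 2 - Pf u (x, y) * Qf u (x, y) * Pyf u (x, y)) / sqrt (Pf u (x, y) ^ 2 + Qf u (x, y) ^ 2) ^ 3).
  { apply is_derive_unique. exact E2. }
  rewrite F1, F2. unfold Nexpr.
  assert (0 < sqrt (Pf u (x, y) ^ 2 + Qf u (x, y) ^ 2)) by (apply sqrt_lt_R0; exact Hpos).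
  field. lra.
Qed.


Lemma dist2_zero p q : dist2 p q = 0 -> p = q.
Proof. intros H. assert (H1 := dist2_ge_x p q). assert (H2 := dist2_ge_y p q).
  rewrite H in H1, H2. assert (A1 := Rabs_pos (fst p - fst q)). assert (A2 := Rabs_pos (snd p - snd q)).
  assert (Rabs (fst p - fst q) = 0) by lra. assert (Rabs (snd p - snd q) = 0) by lra.
  apply Rabs_eq_0 in H0. apply Rabs_eq_0 in H3. destruct p, q; simpl in *. f_equal; lra. Qed.

Lemma hb_top O u p0 C d : C2_on O u -> Sset O u p0 ->
  (forall p, O p -> dist2 p p0 < d -> ~ Sset O u p -> Rabs (Hcurv u p) <= C / dist2 p p0) ->
  forall p, O p -> dist2 p p0 < d -> (Pf u p <> 0 \/ Qf u p <> 0) ->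
    Rabs (Nexpr u p) * dist2 p p0 <= C * sqrt (Pf u p ^ 2 + Qf u p ^ 2) ^ 3.
Proof.
  intros HC HS0 HH p Op Hd Hnz.
  assert (NS : ~ Sset O u p) by (intros [_ [E1 E2]]; destruct Hnz as [Z|Z]; apply Z; [exact E1| exact E2]).
  assert (Hdp : 0 < dist2 p p0).
  { assert (0 <= dist2 p p0) by apply sqrt_pos. destruct (Req_dec (dist2 p p0) 0) as [Z|Z]; [|lra].
    apply dist2_zero in Z. subst p. contradiction. }
  specialize (HH p Op Hd NS). rewrite (Hformula O u p HC Op Hnz) in HH.
  set (S := sqrt (Pf u p ^ 2 + Qf u p ^ 2)) in *.
  assert (HS : 0 < S).
  { unfold S. apply sqrt_lt_R0. destruct Hnz as [Z|Z].
    - assert (0 < Pf u p ^ 2) by (rewrite <- pow2_abs; apply pow_lt; apply Rabs_pos_lt; exact Z).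
      assert (0 <= Qf u p ^ 2) by apply pow2_ge_0. lra.
    - assert (0 < Qf u p ^ 2) by (rewrite <- pow2_abs; apply pow_lt; apply Rabs_pos_lt; exact Z).
      assert (0 <= Pf u p ^ 2) by apply pow2_ge_0. lra. }
  assert (HS3 : 0 < S ^ 3) by (apply pow_lt; exact HS).
  unfold Rdiv in HH. rewrite Rabs_mult, Rabs_inv, (Rabs_right (S ^ 3)) in HH by lra.
  apply (Rmult_le_compat_r (S ^ 3 * dist2 p p0)) in HH; [|apply Rmult_le_pos; lra].
  replace (Rabs (Nexpr u p) * / S ^ 3 * (S ^ 3 * dist2 p p0)) with (Rabs (Nexpr u p) * dist2 p p0) in HH by (field; lra).
  replace (C * / dist2 p p0 * (S ^ 3 * dist2 p p0)) with (C * S ^ 3) in HH by (field; lra).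
  exact HH.
Qed.

Lemma open_box2 x0 y0 r1 r2 : open (fun q : R * R => Rabs (fst q - x0) < r1 /\ Rabs (snd q - y0) < r2).
Proof.
  intros [qx qy] [H1 H2]. simpl in H1, H2.
  assert (Hp : 0 < Rmin (r1 - Rabs (qx - x0)) (r2 - Rabs (qy - y0))) by (apply Rmin_glb_lt; lra).
  exists (mkposreal _ Hp). intros [qx' qy'] Hq'. apply ball_box in Hq'. destruct Hq' as [B1 B2]. simpl in B1, B2.
  assert (B1' : Rabs (qx' - qx) < r1 - Rabs (qx - x0)) by (eapply Rlt_le_trans; [exact B1| apply Rmin_l]).
  assert (B2' : Rabs (qy' - qy) < r2 - Rabs (qy - y0)) by (eapply Rlt_le_trans; [exact B2| apply Rmin_r]).
  simpl. split.
  - replace (qx' - x0) with ((qx' - qx) + (qx - x0)) by ring. eapply Rle_lt_trans; [apply Rabs_triang|]. lra.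
  - replace (qy' - y0) with ((qy' - qy) + (qy - y0)) by ring. eapply Rle_lt_trans; [apply Rabs_triang|]. lra.
Qed.

Lemma Derive_fst_pair (h : R -> R) t : Derive (fun s => fst (s, h s)) t = 1.
Proof. apply is_derive_unique. exact (isd_id t). Qed.

Lemma continuous_Derive_fst (h : R -> R) t : continuous (Derive (fun s => fst (s, h s))) t.
Proof.
  apply (continuous_ext_loc _ (fun _ => 1)).
  - apply locally_R_intro. exists 1. split; [lra|]. intros y _. symmetry. apply Derive_fst_pair.
  - apply continuous_const.
Qed.

Definition concl3 O u p0 := exists V : R * R -> Prop, open V /\ V p0 /\
     exists (a b t0 : R) (g : R -> R * R),
       regular_C1_arc a b g /\ a < t0 < b /\ g t0 = p0 /\
       forall q, (V q /\ Sset O u q) <-> (exists t, a < t < b /\ g t = q).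

Lemma conv_unswapped O u x0 y0 r0 (G K : R * R -> R) d1 rho h :
  (forall q, box (x0, y0) q r0 -> (Sset O u q <-> (G q = 0 /\ K q = 0))) ->
  0 < d1 -> d1 <= rho -> rho <= r0 -> h x0 = y0 ->
  (forall t, Rabs (t - x0) < d1 -> ex_derive h t /\ continuous (Derive h) t) ->
  (forall q, (Rabs (fst q - x0) < d1 /\ Rabs (snd q - y0) < rho /\ G q = 0 /\ K q = 0) <->
             (Rabs (fst q - x0) < d1 /\ snd q = h (fst q))) ->
  concl3 O u (x0, y0).
Proof.
  intros HSG Hd1 Hdr Hrr hx0 Hder Hiff.
  exists (fun q => Rabs (fst q - x0) < d1 /\ Rabs (snd q - y0) < rho). split; [apply open_box2|].
  split. { simpl. rewrite !Rminus_diag, Rabs_R0. lra. }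
  exists (x0 - d1), (x0 + d1), x0, (fun t => (t, h t)).
  assert (It : forall t, x0 - d1 < t < x0 + d1 <-> Rabs (t - x0) < d1).
  { intros t. split; intros H; [apply Rabs_def1; lra| apply Rabs_def2 in H; lra]. }
  split; [split; [lra| split]|].
  - intros t Ht. apply It in Ht. destruct (Hder t Ht) as [E1 E2].
    split; [exists 1; exact (isd_id t)|]. split; [exact E1|]. split; [apply continuous_Derive_fst|].
    split; [exact E2|]. left. rewrite Derive_fst_pair. lra.
  - intros s t _ _ E. injection E. auto.
  - split; [lra|]. split; [rewrite hx0; reflexivity|].
    intros [qx qy]. simpl. split.
    + intros [[H1 H2] HS]. apply HSG in HS; [|split; simpl; lra].
      destruct HS as [G0 K0]. destruct (proj1 (Hiff (qx, qy)) (conj H1 (conj H2 (conj G0 K0)))) as [_ E].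
      simpl in E. exists qx. split; [apply It; exact H1|]. rewrite E. reflexivity.
    + intros [t [Ht E]]. injection E as <- <-. apply It in Ht.
      destruct (proj2 (Hiff (t, h t)) (conj Ht eq_refl)) as [_ [H2 [G0 K0]]]. simpl in H2.
      split; [split; auto|]. apply HSG; [split; simpl; lra| auto].
Qed.

Lemma conv_swapped O u x0 y0 r0 (G K : R * R -> R) d1 rho h :
  (forall q, box (x0, y0) q r0 -> (Sset O u q <-> (G (snd q, fst q) = 0 /\ K (snd q, fst q) = 0))) ->
  0 < d1 -> d1 <= rho -> rho <= r0 -> h y0 = x0 ->
  (forall t, Rabs (t - y0) < d1 -> ex_derive h t /\ continuous (Derive h) t) ->
  (forall q, (Rabs (fst q - y0) < d1 /\ Rabs (snd q - x0) < rho /\ G q = 0 /\ K q = 0) <->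
             (Rabs (fst q - y0) < d1 /\ snd q = h (fst q))) ->
  concl3 O u (x0, y0).
Proof.
  intros HSG Hd1 Hdr Hrr hx0 Hder Hiff.
  exists (fun q => Rabs (fst q - x0) < rho /\ Rabs (snd q - y0) < d1). split; [apply open_box2|].
  split. { simpl. rewrite !Rminus_diag, Rabs_R0. lra. }
  exists (y0 - d1), (y0 + d1), y0, (fun t => (h t, t)).
  assert (It : forall t, y0 - d1 < t < y0 + d1 <-> Rabs (t - y0) < d1).
  { intros t. split; intros H; [apply Rabs_def1; lra| apply Rabs_def2 in H; lra]. }
  split; [split; [lra| split]|].
  - intros t Ht. apply It in Ht. destruct (Hder t Ht) as [E1 E2].
    split; [exact E1|]. split; [exists 1; exact (isd_id t)|]. split; [exact E2|].
    split; [apply (continuous_ext_loc _ (fun _ => 1)); [apply locally_R_intro; exists 1; split; [lra|]; intros y _; symmetry; apply is_derive_unique; exact (isd_id y)| apply continuous_const]|].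
    right. replace (Derive (fun s => snd (h s, s)) t) with 1 by (symmetry; apply is_derive_unique; exact (isd_id t)). lra.
  - intros s t _ _ E. injection E. auto.
  - split; [lra|]. split; [rewrite hx0; reflexivity|].
    intros [qx qy]. simpl. split.
    + intros [[H1 H2] HS]. apply HSG in HS; [|split; simpl; lra].
      destruct HS as [G0 K0]. simpl in G0, K0. destruct (proj1 (Hiff (qy, qx)) (conj H2 (conj H1 (conj G0 K0)))) as [_ E].
      simpl in E. exists qy. split; [apply It; exact H2|]. rewrite E. reflexivity.
    + intros [t [Ht E]]. injection E as <- <-. apply It in Ht.
      destruct (proj2 (Hiff (t, h t)) (conj Ht eq_refl)) as [_ [H2 [G0 K0]]]. simpl in H2.
      split; [split; auto|]. apply HSG; [split; simpl; lra| simpl; auto].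
Qed.


Lemma c3to1 O u p0 : concl3 O u p0 ->
  forall eps, 0 < eps -> exists q, Sset O u q /\ q <> p0 /\ dist2 q p0 < eps.
Proof.
  intros [V [HV [HV0 [a [b [t0 [g [[Hab [Hreg Hinj]] [Ht0 [Hg0 Hiff]]]]]]]]]] eps Heps.
  destruct (Hreg t0 Ht0) as [Ex [Ey _]].
  assert (C1 := cont_R_elim _ _ (ex_derive_continuous _ _ Ex) (eps / 2)).
  assert (C2 := cont_R_elim _ _ (ex_derive_continuous _ _ Ey) (eps / 2)).
  destruct C1 as [e1 [He1 C1]]; [lra|]. destruct C2 as [e2 [He2 C2]]; [lra|].
  set (m := Rmin (Rmin e1 e2) (b - t0)).
  assert (Hm : 0 < m) by (apply Rmin_glb_lt; [apply Rmin_glb_lt|]; lra).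
  assert (Hm1 : m <= e1) by (eapply Rle_trans; [apply Rmin_l| apply Rmin_l]).
  assert (Hm2 : m <= e2) by (eapply Rle_trans; [apply Rmin_l| apply Rmin_r]).
  assert (Hm3 : m <= b - t0) by apply Rmin_r.
  set (t := t0 + m / 2).
  assert (Ht : a < t < b) by (unfold t; lra).
  assert (Htt : Rabs (t - t0) < m) by (unfold t; replace (t0 + m / 2 - t0) with (m / 2) by ring; rewrite Rabs_right; lra).
  exists (g t). split; [|split].
  - apply (proj2 (Hiff (g t))). exists t. split; auto.
  - intro E. rewrite <- Hg0 in E. apply Hinj in E; auto. unfold t in E. lra.
  - specialize (C1 t ltac:(lra)). specialize (C2 t ltac:(lra)).
    eapply Rle_lt_trans; [apply dist2_le|]. rewrite <- Hg0. lra.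
Qed.

Lemma box_swap x0 y0 q r : box (y0, x0) q r -> box (x0, y0) (snd q, fst q) r.
Proof. intros [H1 H2]; split; simpl in *; auto. Qed.

Theorem theorem3p3 (O : R * R -> Prop) (u : R * R -> R) (p0 : R * R) :
  domain2 O -> C2_on O u -> Sset O u p0 ->
  (exists C : R, 0 < C /\ exists delta : R, 0 < delta /\
     forall p, O p -> dist2 p p0 < delta -> ~ Sset O u p ->
       Rabs (Hcurv u p) <= C / dist2 p p0) ->
  ((forall eps : R, 0 < eps -> exists q, Sset O u q /\ q <> p0 /\ dist2 q p0 < eps)
   <-> detU u p0 = 0)
  /\
  (detU u p0 = 0 <->
   exists V : R * R -> Prop, open V /\ V p0 /\
     exists (a b t0 : R) (g : R -> R * R),
       regular_C1_arc a b g /\ a < t0 < b /\ g t0 = p0 /\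
       forall q, (V q /\ Sset O u q) <-> (exists t, a < t < b /\ g t = q)).
Proof.
  intros [HO _] HC2 HS0 [C [HCpos [del [Hdel HHb]]]].
  destruct p0 as [x0 y0].
  assert (O0 : O (x0, y0)) by (destruct HS0; auto).
  destruct (HO _ O0) as [epsO HepsO].
  set (r0 := Rmin epsO (del / 2)).
  assert (Hr0 : 0 < r0) by (apply Rmin_glb_lt; [apply cond_pos| lra]).
  assert (BO : forall q, box (x0, y0) q r0 -> O q).
  { intros q Hq. apply HepsO. apply ball_box. eapply box_mono; [exact Hq| apply Rmin_l]. }
  assert (Bd : forall q, box (x0, y0) q r0 -> dist2 q (x0, y0) < del).
  { intros q [H1 H2]. assert (r0 <= del / 2) by apply Rmin_r.
    eapply Rle_lt_trans; [apply dist2_le|]. simpl in *. lra. }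
  assert (Sch : dx (dy u) (x0, y0) = dy (dx u) (x0, y0)) by exact (schwarz_at O u x0 y0 HO O0 HC2).
  assert (P0 : Pf u (x0, y0) = 0) by (destruct HS0 as [_ [E1 E2]]; exact E1).
  assert (Q0 : Qf u (x0, y0) = 0) by (destruct HS0 as [_ [E1 E2]]; exact E2).
  assert (HB := hb_top O u (x0, y0) C del HC2 HS0 HHb).
  assert (DV := fun q (Hq : box (x0, y0) q r0) => derivs O u q HC2 (BO q Hq)).
  assert (CV := fun q (Hq : box (x0, y0) q r0) => conts O u q HC2 (BO q Hq)).
  assert (B00 : box (x0, y0) (x0, y0) r0) by (split; simpl; rewrite Rminus_diag, Rabs_R0; lra).
  destruct (CV _ B00) as [CPx [CPy [CQx CQy]]].
  assert (Edet : detU u (x0, y0) = Pxf u (x0, y0) * Qyf u (x0, y0) - Pyf u (x0, y0) * Qxf u (x0, y0))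
    by (unfold detU, Pxf, Qyf, Pyf, Qxf; rewrite Sch; ring).
  assert (EQx : Qxf u (x0, y0) = Pyf u (x0, y0) + 2) by (unfold Qxf, Pyf; rewrite Sch; ring).
  assert (HSG : forall q, box (x0, y0) q r0 -> (Sset O u q <-> (Pf u q = 0 /\ Qf u q = 0))).
  { intros q Hq. split; [intros [_ [E1 E2]]; split; auto| intros [E1 E2]; split; [apply BO; auto| split; auto]]. }
  assert (I12 : (forall eps : R, 0 < eps -> exists q, Sset O u q /\ q <> (x0, y0) /\ dist2 q (x0, y0) < eps) -> detU u (x0, y0) = 0).
  { intros H1. destruct (Req_dec (detU u (x0, y0)) 0) as [|Hn]; auto. exfalso.
    destruct (isolated_core (Pf u) (Qf u) (Pxf u) (Pyf u) (Qxf u) (Qyf u) (x0, y0) r0 Hr0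
      (fun p Hp => proj1 (DV p Hp)) (fun p Hp => proj1 (proj2 (DV p Hp)))
      (fun p Hp => proj1 (proj2 (proj2 (DV p Hp)))) (fun p Hp => proj2 (proj2 (proj2 (DV p Hp))))
      CPx CPy CQx CQy) as [r' [Hr' Hiso]].
    { rewrite <- Edet. exact Hn. }
    destruct (H1 (Rmin r' r0)) as [q [Sq [Hne Hdq]]]; [apply Rmin_glb_lt; auto|].
    apply Hne. assert (Bq : box (x0, y0) q (Rmin r' r0)).
    { split; [eapply Rle_lt_trans; [apply (dist2_ge_x q (x0, y0))| exact Hdq]| eapply Rle_lt_trans; [apply (dist2_ge_y q (x0, y0))| exact Hdq]]. }
    apply Hiso.
    - eapply box_mono; [exact Bq| apply Rmin_l].
    - rewrite P0. destruct Sq as [_ [E1 _]]. exact E1.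
    - rewrite Q0. destruct Sq as [_ [_ E2]]. exact E2. }
  assert (I23 : detU u (x0, y0) = 0 -> concl3 O u (x0, y0)).
  { intros Hdz.
    assert (Dz : Pxf u (x0, y0) * Qyf u (x0, y0) - Pyf u (x0, y0) * (Pyf u (x0, y0) + 2) = 0)
      by (rewrite <- EQx, <- Edet; exact Hdz).
    assert (HGxP := fun p Hp => proj1 (DV p Hp)).
    assert (HGyP := fun p Hp => proj1 (proj2 (DV p Hp))).
    assert (HGxQ := fun p Hp => proj1 (proj2 (proj2 (DV p Hp)))).
    assert (HGyQ := fun p Hp => proj2 (proj2 (proj2 (DV p Hp)))).
    assert (CPx' := fun p Hp => proj1 (CV p Hp)).
    assert (CPy' := fun p Hp => proj1 (proj2 (CV p Hp))).
    assert (CQx' := fun p Hp => proj1 (proj2 (proj2 (CV p Hp)))).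
    assert (CQy' := fun p Hp => proj2 (proj2 (proj2 (CV p Hp)))).
    assert (Cc2 : cont_at (fun q => - (Pyf u q + Qxf u q)) (x0, y0)) by (apply cont_at_opp; apply cont_at_plus; auto).
    destruct (Req_dec (Pyf u (x0, y0)) 0) as [Py0|Py0].
    - destruct (Req_dec (Qyf u (x0, y0)) 0) as [Qy0|Qy0].
      +
        assert (HH : forall p, box (y0, x0) p r0 ->
          ((fun q => Qf u (snd q, fst q)) p <> 0 \/ (fun q => Pf u (snd q, fst q)) p <> 0) ->
          Rabs ((fun q => Pxf u (snd q, fst q)) p * (fun q => Qf u (snd q, fst q)) p ^ 2 +
                (fun q => - (Pyf u (snd q, fst q) + Qxf u (snd q, fst q))) p * (fun q => Qf u (snd q, fst q)) p * (fun q => Pf u (snd q, fst q)) p +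
                (fun q => Qyf u (snd q, fst q)) p * (fun q => Pf u (snd q, fst q)) p ^ 2) * dist2 p (y0, x0)
            <= C * sqrt ((fun q => Qf u (snd q, fst q)) p ^ 2 + (fun q => Pf u (snd q, fst q)) p ^ 2) ^ 3).
        { intros [s t] Hp Hnz. assert (Hp' := box_swap x0 y0 (s, t) r0 Hp).
          cbv beta iota delta [fst snd] in *.
          assert (Ed : dist2 (s, t) (y0, x0) = dist2 (t, s) (x0, y0)) by (unfold dist2; simpl; rewrite Rplus_comm; reflexivity).
          rewrite Ed, (Rplus_comm (Qf u (t, s) ^ 2) (Pf u (t, s) ^ 2)).
          replace (Pxf u (t, s) * Qf u (t, s) ^ 2 + - (Pyf u (t, s) + Qxf u (t, s)) * Qf u (t, s) * Pf u (t, s) + Qyf u (t, s) * Pf u (t, s) ^ 2)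
            with (Nexpr u (t, s)) by (unfold Nexpr; ring).
          apply HB; auto. destruct Hnz; auto. }
        destruct (curve_core (fun q => Qf u (snd q, fst q)) (fun q => Pf u (snd q, fst q))
          (fun q => Qyf u (snd q, fst q)) (fun q => Qxf u (snd q, fst q))
          (fun q => Pyf u (snd q, fst q)) (fun q => Pxf u (snd q, fst q))
          (fun q => Pxf u (snd q, fst q)) (fun q => - (Pyf u (snd q, fst q) + Qxf u (snd q, fst q))) (fun q => Qyf u (snd q, fst q))
          y0 x0 r0 C Hr0
          (fun p Hp => HGyQ _ (box_swap x0 y0 p r0 Hp))
          (fun p Hp => HGxQ _ (box_swap x0 y0 p r0 Hp))
          (fun p Hp => HGyP _ (box_swap x0 y0 p r0 Hp))
          (fun p Hp => HGxP _ (box_swap x0 y0 p r0 Hp))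
          (fun p Hp => cont_at_swap _ _ (CQy' _ (box_swap x0 y0 p r0 Hp)))
          (fun p Hp => cont_at_swap _ _ (CQx' _ (box_swap x0 y0 p r0 Hp)))
          (cont_at_swap _ (y0, x0) CPy) (cont_at_swap _ (y0, x0) CPx)
          (cont_at_swap _ (y0, x0) CPx) (cont_at_swap (fun q => - (Pyf u q + Qxf u q)) (y0, x0) Cc2) (cont_at_swap _ (y0, x0) CQy)
          Q0 P0) as [d1 [rho [h [Hd1 [Hdr [Hrr [hx0 [Hder Hiff]]]]]]]].
        * cbv beta iota delta [fst snd]. rewrite EQx, Py0. lra.
        * cbv beta iota delta [fst snd]. rewrite EQx, Py0, Qy0. ring.
        * cbv beta iota delta [fst snd]. rewrite EQx, Py0, Qy0. ring.
        * cbv beta iota delta [fst snd]. rewrite EQx, Py0, Qy0. lra.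
        * exact HCpos.
        * exact HH.
        * apply (conv_swapped O u x0 y0 r0 (fun q => Qf u (snd q, fst q)) (fun q => Pf u (snd q, fst q)) d1 rho h); auto.
          intros [a b] Hq. rewrite (HSG (a, b) Hq). cbv beta iota delta [fst snd]. tauto.
      +
        assert (HH : forall p, box (x0, y0) p r0 -> (Qf u p <> 0 \/ Pf u p <> 0) ->
          Rabs (Pxf u p * Qf u p ^ 2 + (fun q => - (Pyf u q + Qxf u q)) p * Qf u p * Pf u p + Qyf u p * Pf u p ^ 2) * dist2 p (x0, y0)
            <= C * sqrt (Qf u p ^ 2 + Pf u p ^ 2) ^ 3).
        { intros p Hp Hnz. rewrite (Rplus_comm (Qf u p ^ 2) (Pf u p ^ 2)).
          replace (Pxf u p * Qf u p ^ 2 + (fun q => - (Pyf u q + Qxf u q)) p * Qf u p * Pf u p + Qyf u p * Pf u p ^ 2) with (Nexpr u p) by (unfold Nexpr; ring).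
          apply HB; auto. destruct Hnz; auto. }
        destruct (curve_core (Qf u) (Pf u) (Qxf u) (Qyf u) (Pxf u) (Pyf u) (Pxf u) (fun q => - (Pyf u q + Qxf u q)) (Qyf u)
          x0 y0 r0 C Hr0 HGxQ HGyQ HGxP HGyP CQx' CQy' CPx CPy CPx Cc2 CQy Q0 P0 Qy0) as [d1 [rho [h [Hd1 [Hdr [Hrr [hx0 [Hder Hiff]]]]]]]].
        * rewrite Edet in Hdz. lra.
        * cbv beta. rewrite EQx.
          replace (Pxf u (x0, y0) * Qyf u (x0, y0) ^ 2 + - (Pyf u (x0, y0) + (Pyf u (x0, y0) + 2)) * Qyf u (x0, y0) * Pyf u (x0, y0) + Qyf u (x0, y0) * Pyf u (x0, y0) ^ 2)
            with (Qyf u (x0, y0) * (Pxf u (x0, y0) * Qyf u (x0, y0) - Pyf u (x0, y0) * (Pyf u (x0, y0) + 2))) by ring.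
          rewrite Dz. ring.
        * cbv beta. rewrite EQx.
          replace (- (Pyf u (x0, y0) + (Pyf u (x0, y0) + 2)) * Qyf u (x0, y0) + 2 * Qyf u (x0, y0) * Pyf u (x0, y0))
            with (-2 * Qyf u (x0, y0)) by ring.
          intro Z. apply Qy0. lra.
        * exact HCpos.
        * exact HH.
        * apply (conv_unswapped O u x0 y0 r0 (Qf u) (Pf u) d1 rho h); auto.
          intros q Hq. rewrite (HSG q Hq). tauto.
    -
      assert (HH : forall p, box (x0, y0) p r0 -> (Pf u p <> 0 \/ Qf u p <> 0) ->
        Rabs (Qyf u p * Pf u p ^ 2 + (fun q => - (Pyf u q + Qxf u q)) p * Pf u p * Qf u p + Pxf u p * Qf u p ^ 2) * dist2 p (x0, y0)
          <= C * sqrt (Pf u p ^ 2 + Qf u p ^ 2) ^ 3).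
      { intros p Hp Hnz.
        replace (Qyf u p * Pf u p ^ 2 + (fun q => - (Pyf u q + Qxf u q)) p * Pf u p * Qf u p + Pxf u p * Qf u p ^ 2) with (Nexpr u p) by (unfold Nexpr; ring).
        apply HB; auto. }
      destruct (curve_core (Pf u) (Qf u) (Pxf u) (Pyf u) (Qxf u) (Qyf u) (Qyf u) (fun q => - (Pyf u q + Qxf u q)) (Pxf u)
        x0 y0 r0 C Hr0 HGxP HGyP HGxQ HGyQ CPx' CPy' CQx CQy CQy Cc2 CPx P0 Q0 Py0) as [d1 [rho [h [Hd1 [Hdr [Hrr [hx0 [Hder Hiff]]]]]]]].
      * rewrite EQx. replace (Pyf u (x0, y0) * (Pyf u (x0, y0) + 2) - Pxf u (x0, y0) * Qyf u (x0, y0)) with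
          (- (Pxf u (x0, y0) * Qyf u (x0, y0) - Pyf u (x0, y0) * (Pyf u (x0, y0) + 2))) by ring. rewrite Dz. ring.
      * cbv beta. rewrite EQx.
        replace (Qyf u (x0, y0) * Pyf u (x0, y0) ^ 2 + - (Pyf u (x0, y0) + (Pyf u (x0, y0) + 2)) * Pyf u (x0, y0) * Qyf u (x0, y0) + Pxf u (x0, y0) * Qyf u (x0, y0) ^ 2)
          with (Qyf u (x0, y0) * (Pxf u (x0, y0) * Qyf u (x0, y0) - Pyf u (x0, y0) * (Pyf u (x0, y0) + 2))) by ring.
        rewrite Dz. ring.
      * cbv beta. rewrite EQx.
        replace (- (Pyf u (x0, y0) + (Pyf u (x0, y0) + 2)) * Pyf u (x0, y0) + 2 * Pxf u (x0, y0) * Qyf u (x0, y0))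
          with (2 * (Pxf u (x0, y0) * Qyf u (x0, y0) - Pyf u (x0, y0) * (Pyf u (x0, y0) + 2)) + 2 * Pyf u (x0, y0)) by ring.
        rewrite Dz. intro Z. apply Py0. lra.
      * exact HCpos.
      * exact HH.
      * apply (conv_unswapped O u x0 y0 r0 (Pf u) (Qf u) d1 rho h); auto. }
  split; split.
  - exact I12.
  - intros Hdz. apply c3to1. apply I23. exact Hdz.
  - exact I23.
  - intros H3. apply I12. apply c3to1. exact H3.
Qed.
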